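(* Let $(\mathcal L(s),\mathcal P(s))$ be a solution of the $N$-dcmKP hierarchy, with $\mathcal L=k+u_1(s,t)+u_2(s,t)k^{-1}+\cdots$ and $\mathcal P=p_0(s,t)k^N+\cdots$. Then $$\mathcal L^{\mathrm{dmKP}}(k;s,t):=\mathcal L(k-u_1(s,t);s,t),\qquad \mathcal P^{\mathrm{dmKP}}(k;s,t):=p_0(s,t)^{-1}\mathcal P(k-u_1(s,t);s,t)$$ is a solution of the dmKP hierarchy.
   Context: Fix a positive integer $N$. Variables $s$ (continuous), $x$, $t=(t_1,t_2,\dots)$; Poisson bracket $\{f,g\}=\frac{\partial f}{\partial k}\frac{\partial g}{\partial x}-\frac{\partial f}{\partial x}\frac{\partial g}{\partial k}$. For a series, $(\cdot)_{>0}$, $(\cdot)_{\ge0}$ denote projections onto powers $k^n$ with $n>0$, resp. $n\ge0$. For a series $\mathcal P=p_0k^N+\sum_{n\ge1}p_nk^{N-n}$, $\log\mathcal P:=\log p_0+N\log k+\log(1+\sum_{n\ge1}(p_n/p_0)k^{-n})$ expanded in $k^{-1}$. The $N$-dcmKP hierarchy: $\mathcal L=k+\sum_{n\ge1}u_n(s,t)k^{1-n}$, $\mathcal P=\sum_{n=0}^{N-1}p_n(s,t)k^{N-n}$ with $p_0\ne0$, satisfying $\partial_{t_n}\mathcal L=\{\mathcal B_n,\mathcal L\}$ with $\mathcal B_n:=(\mathcal L^n)_{>0}$, $\partial_s\mathcal L=\{\log\mathcal P,\mathcal L\}$, $\partial_{t_n}\log\mathcal P=\partial_s\mathcal B_n-\{\log\mathcal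 P,\mathcal B_n\}$ ($n\ge1$). The dmKP hierarchy: $\mathcal L^{\mathrm{dmKP}}=k+u^{\mathrm{dmKP}}_2k^{-1}+u^{\mathrm{dmKP}}_3k^{-2}+\cdots$ (no $k^0$ term) and $\mathcal P^{\mathrm{dmKP}}=k^N+q_1k^{N-1}+\cdots+q_N$, satisfying the same three equations with $\mathcal B_n$ replaced by $\mathcal B^{\mathrm{dmKP}}_n:=((\mathcal L^{\mathrm{dmKP}})^n)_{\ge0}$. *)

(* Defs.v *)
From Stdlib Require Import Reals ZArith List.
From Coquelicot Require Import Coquelicot.
Open Scope R_scope.

(** Coefficient functions of the variables (s, x, t) where
    t : nat -> R encodes the times, with  t m = t_(m+1). *)
Definition Fn := R -> R -> (nat -> R) -> R.

Definition zeroF : Fn := fun _ _ _ => 0.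
Definition constF (c : R) : Fn := fun _ _ _ => c.

Definition upd (t : nat -> R) (m : nat) (y : R) : nat -> R :=
  fun k => if Nat.eqb k m then y else t k.

Definition dS (f : Fn) : Fn := fun s x t => Derive (fun y => f y x t) s.
Definition dX (f : Fn) : Fn := fun s x t => Derive (fun y => f s y t) x.
(** derivative with respect to t_n  (n >= 1), i.e. the coordinate n-1 of t *)
Definition dT (n : nat) (f : Fn) : Fn :=
  fun s x t => Derive (fun y => f s x (upd t (pred n) y)) (t (pred n)).

Definition regular (f : Fn) : Prop :=
  forall s x t,
    ex_derive (fun y => f y x t) s /\ ex_derive (fun y => f s y t) x /\
    forall m, ex_derive (fun y => f s x (upd t m y)) (t m).

(** Formal Laurent series in k, bounded above in degree:
    sum_{i <= sdeg} sco i k^i (coefficients above sdeg are ignored). *)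
Record ser := mkSer { sdeg : Z; sco : Z -> Fn }.

Definition coef (f : ser) (i : Z) : Fn :=
  if (i <=? sdeg f)%Z then sco f i else zeroF.

Definition sumZ (lo : Z) (n : nat) (F : Z -> R) : R :=
  fold_right Rplus 0 (map (fun j => F (lo + Z.of_nat j)%Z) (seq 0 n)).

Definition sadd (f g : ser) : ser :=
  mkSer (Z.max (sdeg f) (sdeg g))
        (fun i s x t => coef f i s x t + coef g i s x t).
Definition sopp (f : ser) : ser :=
  mkSer (sdeg f) (fun i s x t => - coef f i s x t).
Definition ssub (f g : ser) : ser := sadd f (sopp g).
Definition sscale (c : Fn) (f : ser) : ser :=
  mkSer (sdeg f) (fun i s x t => c s x t * coef f i s x t).
Definition smul (f g : ser) : ser :=
  mkSer (sdeg f + sdeg g)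
    (fun m s x t => sumZ (m - sdeg g) (Z.to_nat (sdeg f - (m - sdeg g) + 1))
                         (fun i => coef f i s x t * coef g (m - i) s x t)).
Definition monoS (d : Z) (c : Fn) : ser :=
  mkSer d (fun i => if Z.eqb i d then c else zeroF).
Definition sone : ser := monoS 0 (constF 1).
Definition spow (f : ser) (n : nat) : ser := Nat.iter n (smul f) sone.

Definition spos (f : ser) : ser :=
  mkSer (sdeg f) (fun i => if (0 <? i)%Z then coef f i else zeroF).
Definition snneg (f : ser) : ser :=
  mkSer (sdeg f) (fun i => if (0 <=? i)%Z then coef f i else zeroF).

Definition sdk (f : ser) : ser :=
  mkSer (sdeg f - 1) (fun i s x t => IZR (i + 1) * coef f (i + 1) s x t).
Definition smap (D : Fn -> Fn) (f : ser) : ser :=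
  mkSer (sdeg f) (fun i => D (coef f i)).

Definition pb (f g : ser) : ser :=
  ssub (smul (sdk f) (smap dX g)) (smul (smap dX f) (sdk g)).

Definition ser_eq (f g : ser) : Prop :=
  forall i s x t, coef f i s x t = coef g i s x t.

(** Logarithm of P = p_0 k^N + sum_{n>=1} p_n k^{N-n} (N = its degree):
    log P = log p_0 + N log k + log(1 + q),  q = sum_{n>=1} (p_n/p_0) k^{-n},
    log(1+q) = sum_{m>=1} (-1)^(m+1) q^m / m  expanded in k^{-1}. *)
Definition lead (P : ser) (N : Z) : Fn := coef P N.
Definition lq (P : ser) (N : Z) : ser :=
  mkSer (-1) (fun i s x t => coef P (N + i) s x t / lead P N s x t).
Definition logtail (P : ser) (N : Z) : ser :=
  mkSer (-1) (fun i s x t =>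
    fold_right Rplus 0
      (map (fun m => (-1) ^ (m + 1) / INR m * coef (spow (lq P N) m) i s x t)
           (seq 1 (Z.to_nat (- i))))).
(** the function log p_0 (real logarithm of |p_0|; only its derivatives enter) *)
Definition logc (P : ser) (N : Z) : Fn := fun s x t => ln (Rabs (lead P N s x t)).

Definition log_dk (P : ser) (N : Z) : ser :=
  sadd (monoS (-1) (constF (IZR N))) (sdk (logtail P N)).
(** D log P for D a derivation in s, x or t_n (log k is independent of them) *)
Definition log_dD (D : Fn -> Fn) (P : ser) (N : Z) : ser :=
  sadd (monoS 0 (D (logc P N))) (smap D (logtail P N)).
Definition pbLog (P : ser) (N : Z) (g : ser) : ser :=
  ssub (smul (log_dk P N) (smap dX g)) (smul (log_dD dX P N) (sdk g)).

Definition hier_eqs (N : Z) (B : nat -> ser) (L P : ser) : Prop :=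
  (forall n, (1 <= n)%nat -> ser_eq (smap (dT n) L) (pb (B n) L)) /\
  ser_eq (smap dS L) (pbLog P N L) /\
  (forall n, (1 <= n)%nat ->
     ser_eq (log_dD (dT n) P N) (ssub (smap dS (B n)) (pbLog P N (B n)))).

Definition regular_ser (f : ser) : Prop := forall i, regular (coef f i).

Definition is_dcmKP (N : nat) (L P : ser) : Prop :=
  (forall s x t, coef L 1 s x t = 1) /\
  (forall i, (1 < i)%Z -> forall s x t, coef L i s x t = 0) /\
  (forall i, (Z.of_nat N < i)%Z -> forall s x t, coef P i s x t = 0) /\
  (forall i, (i <= 0)%Z -> forall s x t, coef P i s x t = 0) /\
  (forall s x t, coef P (Z.of_nat N) s x t <> 0) /\
  regular_ser L /\ regular_ser P /\
  hier_eqs (Z.of_nat N) (fun n => spos (spow L n)) L P.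

Definition is_dmKP (N : nat) (L P : ser) : Prop :=
  (forall s x t, coef L 1 s x t = 1) /\
  (forall i, (1 < i)%Z -> forall s x t, coef L i s x t = 0) /\
  (forall s x t, coef L 0 s x t = 0) /\
  (forall s x t, coef P (Z.of_nat N) s x t = 1) /\
  (forall i, (Z.of_nat N < i)%Z -> forall s x t, coef P i s x t = 0) /\
  (forall i, (i < 0)%Z -> forall s x t, coef P i s x t = 0) /\
  regular_ser L /\ regular_ser P /\
  hier_eqs (Z.of_nat N) (fun n => snneg (spow L n)) L P.

Definition gbinom (z : Z) (j : nat) : R :=
  fold_right Rmult 1 (map (fun l => IZR z - INR l) (seq 0 j)) / INR (fact j).

(** f(k - a) expanded in powers of k^{-1}:
    coefficient of k^m is  sum_{j>=0} f_{m+j} binom(m+j, j) (-a)^j *)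
Definition sshift (f : ser) (a : Fn) : ser :=
  mkSer (sdeg f) (fun m s x t =>
    sumZ 0 (Z.to_nat (sdeg f - m + 1))
      (fun j => coef f (m + j) s x t * gbinom (m + j) (Z.to_nat j) * (- a s x t) ^ (Z.to_nat j))).

(* Main.v *)
Require Import Defs.
From Stdlib Require Import Reals ZArith List Lia Lra Setoid Morphisms FunctionalExtensionality.
From Coquelicot Require Import Coquelicot.
Open Scope R_scope.

Lemma sumZ_0 lo F : sumZ lo 0 F = 0.
Proof. reflexivity. Qed.

Lemma sumZ_S lo n F : sumZ lo (S n) F = F lo + sumZ (lo+1) n F.
Proof.
  unfold sumZ. simpl. rewrite Z.add_0_r. f_equal.
  rewrite <- seq_shift, map_map. f_equal. apply map_ext. intros j. f_equal. lia.
Qed.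

Lemma sumZ_Sr lo n F : sumZ lo (S n) F = sumZ lo n F + F (lo + Z.of_nat n)%Z.
Proof.
  revert lo; induction n; intros lo.
  - rewrite sumZ_S, !sumZ_0. simpl. rewrite Z.add_0_r. ring.
  - rewrite sumZ_S, IHn, (sumZ_S lo n). replace (lo + 1 + Z.of_nat n)%Z with (lo + Z.of_nat (S n))%Z by lia. ring.
Qed.

Lemma sumZ_add lo n m F : sumZ lo (n+m) F = sumZ lo n F + sumZ (lo + Z.of_nat n) m F.
Proof.
  revert lo; induction n; intros lo.
  - simpl. rewrite sumZ_0, Z.add_0_r. ring.
  - rewrite Nat.add_succ_l, !sumZ_S, IHn. replace (lo + 1 + Z.of_nat n)%Z with (lo + Z.of_nat (S n))%Z by lia. ring.
Qed.

Lemma sumZ_ext lo n F G : (forall j, (lo <= j < lo + Z.of_nat n)%Z -> F j = G j) ->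
  sumZ lo n F = sumZ lo n G.
Proof.
  revert lo; induction n; intros lo H; [reflexivity|].
  rewrite !sumZ_S. f_equal; [apply H; lia|]. apply IHn. intros; apply H; lia.
Qed.

Lemma sumZ_zero lo n F : (forall j, (lo <= j < lo + Z.of_nat n)%Z -> F j = 0) -> sumZ lo n F = 0.
Proof.
  intros H. transitivity (sumZ lo n (fun _ => 0)).
  - apply sumZ_ext; auto.
  - clear H. revert lo; induction n; intros lo; [reflexivity|]. rewrite sumZ_S, IHn; ring.
Qed.

Lemma sumZ_plus lo n F G : sumZ lo n (fun j => F j + G j) = sumZ lo n F + sumZ lo n G.
Proof. revert lo; induction n; intros lo; [simpl; unfold sumZ; simpl; ring|]. rewrite !sumZ_S, IHn; ring. Qed.

Lemma sumZ_scal lo n c F : sumZ lo n (fun j => c * F j) = c * sumZ lo n F.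
Proof. revert lo; induction n; intros lo; [unfold sumZ; simpl; ring|]. rewrite !sumZ_S, IHn; ring. Qed.

Lemma sumZ_scalr lo n c F : sumZ lo n (fun j => F j * c) = sumZ lo n F * c.
Proof. revert lo; induction n; intros lo; [unfold sumZ; simpl; ring|]. rewrite !sumZ_S, IHn; ring. Qed.

Lemma sumZ_opp lo n F : sumZ lo n (fun j => - F j) = - sumZ lo n F.
Proof. revert lo; induction n; intros lo; [unfold sumZ; simpl; ring|]. rewrite !sumZ_S, IHn; ring. Qed.

Lemma sumZ_swap a n b m (F : Z -> Z -> R) :
  sumZ a n (fun i => sumZ b m (fun j => F i j)) = sumZ b m (fun j => sumZ a n (fun i => F i j)).
Proof.
  revert a; induction n; intros a.
  - rewrite sumZ_0. symmetry. apply sumZ_zero. intros; reflexivity.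
  - rewrite sumZ_S, IHn. rewrite <- sumZ_plus. apply sumZ_ext. intros. rewrite sumZ_S. reflexivity.
Qed.

Lemma sumZ_shift lo n c F : sumZ lo n (fun i => F (i + c)%Z) = sumZ (lo + c) n F.
Proof.
  revert lo; induction n; intros lo; [reflexivity|]. rewrite !sumZ_S, IHn.
  f_equal. f_equal. lia.
Qed.

Lemma sumZ_refl lo n m F : sumZ lo n (fun i => F (m - i)%Z) = sumZ (m - (lo + Z.of_nat n - 1)) n F.
Proof.
  revert lo; induction n; intros lo; [reflexivity|]. rewrite sumZ_S, sumZ_Sr, IHn.
  replace (m - (lo + 1 + Z.of_nat n - 1))%Z with (m - (lo + Z.of_nat (S n) - 1))%Z by lia.
  replace (m - (lo + Z.of_nat (S n) - 1) + Z.of_nat n)%Z with (m - lo)%Z by lia. ring.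
Qed.

Definition supp_in (F : Z -> R) (a b : Z) := forall i, (i < a \/ b < i)%Z -> F i = 0.

Lemma sum_cover F a b lo n : supp_in F a b -> (lo <= a)%Z -> (b < lo + Z.of_nat n)%Z ->
  sumZ lo n F = sumZ a (Z.to_nat (b - a + 1)) F.
Proof.
  intros H H1 H2. destruct (Z_lt_le_dec b a) as [Hba|Hba].
  - rewrite sumZ_zero by (intros; apply H; lia). symmetry; apply sumZ_zero. intros; apply H; lia.
  - replace n with (Z.to_nat (a - lo) + (Z.to_nat (b - a + 1) + (n - Z.to_nat (b - lo + 1))))%nat by lia.
    rewrite !sumZ_add. rewrite (sumZ_zero lo) by (intros; apply H; lia).
    rewrite (sumZ_zero (lo + Z.of_nat (Z.to_nat (a - lo)) + _)) by (intros; apply H; lia).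
    replace (lo + Z.of_nat (Z.to_nat (a - lo)))%Z with a by lia. ring.
Qed.

Lemma sum_indep F a b lo n lo' n' : supp_in F a b ->
  (lo <= a)%Z -> (b < lo + Z.of_nat n)%Z -> (lo' <= a)%Z -> (b < lo' + Z.of_nat n')%Z ->
  sumZ lo n F = sumZ lo' n' F.
Proof. intros. rewrite (sum_cover F a b lo n), (sum_cover F a b lo' n'); auto. Qed.

Lemma coef_hi f i s x t : (sdeg f < i)%Z -> coef f i s x t = 0.
Proof. intros H. unfold coef. destruct (Z.leb_spec i (sdeg f)); [lia|reflexivity]. Qed.

Definition deg_le (f : ser) (d : Z) := forall i, (d < i)%Z -> forall s x t, coef f i s x t = 0.

Lemma deg_le_sdeg f : deg_le f (sdeg f).
Proof. intros i Hi s x t; apply coef_hi; auto. Qed.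

Lemma deg_le_mono f d d' : deg_le f d -> (d <= d')%Z -> deg_le f d'.
Proof. intros H Hd i Hi; apply H; lia. Qed.

Lemma deg_le_eq f g d : ser_eq f g -> deg_le f d -> deg_le g d.
Proof. intros E H i Hi s x t. rewrite <- E. apply H; auto. Qed.

Definition szero : ser := mkSer 0 (fun _ => zeroF).

Lemma coef_szero i s x t : coef szero i s x t = 0.
Proof. unfold coef; destruct (_ <=? _)%Z; reflexivity. Qed.

Lemma coef_sadd f g i s x t : coef (sadd f g) i s x t = coef f i s x t + coef g i s x t.
Proof.
  unfold coef at 1; simpl. destruct (Z.leb_spec i (Z.max (sdeg f) (sdeg g))); [reflexivity|].
  rewrite !coef_hi by lia. unfold zeroF; ring.
Qed.

Lemma coef_sopp f i s x t : coef (sopp f) i s x t = - coef f i s x t.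
Proof.
  unfold coef at 1; simpl. destruct (Z.leb_spec i (sdeg f)); [reflexivity|].
  rewrite !coef_hi by lia. unfold zeroF; ring.
Qed.

Lemma coef_ssub f g i s x t : coef (ssub f g) i s x t = coef f i s x t - coef g i s x t.
Proof. unfold ssub. rewrite coef_sadd, coef_sopp. ring. Qed.

Lemma coef_sscale c f i s x t : coef (sscale c f) i s x t = c s x t * coef f i s x t.
Proof.
  unfold coef at 1; simpl. destruct (Z.leb_spec i (sdeg f)); [reflexivity|].
  rewrite !coef_hi by lia. unfold zeroF; ring.
Qed.

Lemma coef_monoS d c i s x t : coef (monoS d c) i s x t = if Z.eqb i d then c s x t else 0.
Proof.
  unfold coef; simpl. destruct (Z.leb_spec i d); destruct (Z.eqb_spec i d); try reflexivity; lia.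
Qed.

Lemma coef_sone i s x t : coef sone i s x t = if Z.eqb i 0 then 1 else 0.
Proof. unfold sone. rewrite coef_monoS. reflexivity. Qed.

Lemma coef_sdk f i s x t : coef (sdk f) i s x t = IZR (i + 1) * coef f (i + 1) s x t.
Proof.
  unfold coef at 1; simpl. destruct (Z.leb_spec i (sdeg f - 1)); [reflexivity|].
  rewrite !coef_hi by lia. unfold zeroF; ring.
Qed.

Lemma coef_spos f i s x t : coef (spos f) i s x t = if (0 <? i)%Z then coef f i s x t else 0.
Proof.
  unfold coef at 1; simpl. destruct (Z.leb_spec i (sdeg f)); [destruct (0 <? i)%Z; reflexivity|].
  rewrite !coef_hi by lia. destruct (0 <? i)%Z; reflexivity.
Qed.

Lemma coef_snneg f i s x t : coef (snneg f) i s x t = if (0 <=? i)%Z then coef f i s x t else 0.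
Proof.
  unfold coef at 1; simpl. destruct (Z.leb_spec i (sdeg f)); [destruct (0 <=? i)%Z; reflexivity|].
  rewrite !coef_hi by lia. destruct (0 <=? i)%Z; reflexivity.
Qed.

Lemma coef_smap D f i s x t : D zeroF = zeroF -> coef (smap D f) i s x t = D (coef f i) s x t.
Proof.
  intros HD. unfold coef at 1; simpl. destruct (Z.leb_spec i (sdeg f)).
  - reflexivity.
  - unfold coef. destruct (Z.leb_spec i (sdeg f)); [lia|]. rewrite HD. reflexivity.
Qed.

Lemma coef_smul_gen f g df dg m lo n s x t :
  deg_le f df -> deg_le g dg -> (lo <= m - dg)%Z -> (df < lo + Z.of_nat n)%Z ->
  coef (smul f g) m s x t = sumZ lo n (fun i => coef f i s x t * coef g (m - i) s x t).
Proof.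
  intros Hf Hg H1 H2.
  assert (Hs : supp_in (fun i => coef f i s x t * coef g (m - i) s x t) (Z.max (m - dg) (m - sdeg g)) (Z.min df (sdeg f))).
  { intros i Hi. destruct (Z_lt_le_dec i (Z.max (m - dg) (m - sdeg g))).
    - destruct (Z_lt_le_dec i (m - dg)).
      + rewrite (Hg (m - i)%Z) by lia; ring.
      + rewrite (coef_hi g (m-i)) by lia; ring.
    - destruct (Z_lt_le_dec df i).
      + rewrite (Hf i) by lia; ring.
      + rewrite (coef_hi f i) by lia; ring. }
  unfold coef at 1; simpl. destruct (Z.leb_spec m (sdeg f + sdeg g)).
  - apply (sum_indep _ _ _ _ _ _ _ Hs); lia.
  - unfold zeroF. symmetry. apply sumZ_zero. intros j Hj. apply Hs. lia.
Qed.

Lemma coef_smul_cover f g df dg m s x t :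
  deg_le f df -> deg_le g dg ->
  coef (smul f g) m s x t = sumZ (m - dg) (Z.to_nat (df - (m - dg) + 1)) (fun i => coef f i s x t * coef g (m - i) s x t).
Proof. intros; apply coef_smul_gen with df dg; auto; lia. Qed.

Lemma deg_le_smul f g df dg : deg_le f df -> deg_le g dg -> deg_le (smul f g) (df + dg).
Proof.
  intros Hf Hg m Hm s x t. rewrite (coef_smul_cover f g df dg) by auto.
  apply sumZ_zero. intros j Hj. rewrite (Hf j) by lia. ring.
Qed.

Lemma coef_smul_top f g df dg s x t : deg_le f df -> deg_le g dg ->
  coef (smul f g) (df + dg) s x t = coef f df s x t * coef g dg s x t.
Proof.
  intros Hf Hg. rewrite (coef_smul_gen f g df dg _ df 1) by (auto; lia).
  rewrite sumZ_S, sumZ_0. replace (df + dg - df)%Z with dg by lia. ring.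
Qed.

Lemma deg_le_sadd f g d : deg_le f d -> deg_le g d -> deg_le (sadd f g) d.
Proof. intros Hf Hg i Hi s x t. rewrite coef_sadd, Hf, Hg by auto. ring. Qed.
Lemma deg_le_sopp f d : deg_le f d -> deg_le (sopp f) d.
Proof. intros Hf i Hi s x t. rewrite coef_sopp, Hf by auto. ring. Qed.
Lemma deg_le_ssub f g d : deg_le f d -> deg_le g d -> deg_le (ssub f g) d.
Proof. intros; apply deg_le_sadd; auto; apply deg_le_sopp; auto. Qed.
Lemma deg_le_sscale c f d : deg_le f d -> deg_le (sscale c f) d.
Proof. intros Hf i Hi s x t. rewrite coef_sscale, Hf by auto. ring. Qed.
Lemma deg_le_monoS d c : deg_le (monoS d c) d.
Proof. intros i Hi s x t. rewrite coef_monoS. destruct (Z.eqb_spec i d); [lia|auto]. Qed.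
Lemma deg_le_sdk f d : deg_le f d -> deg_le (sdk f) (d - 1).
Proof. intros Hf i Hi s x t. rewrite coef_sdk, Hf by lia. ring. Qed.
Lemma deg_le_szero d : deg_le szero d.
Proof. intros i Hi s x t. apply coef_szero. Qed.

Lemma ser_eq_refl f : ser_eq f f. Proof. intros ????; reflexivity. Qed.
Lemma ser_eq_sym f g : ser_eq f g -> ser_eq g f. Proof. intros H ????; symmetry; apply H. Qed.
Lemma ser_eq_trans f g h : ser_eq f g -> ser_eq g h -> ser_eq f h.
Proof. intros H1 H2 ????; rewrite H1; apply H2. Qed.

Definition ser_setoid : Setoid_Theory ser ser_eq :=
  Build_Setoid_Theory _ ser_eq ser_eq_refl ser_eq_sym ser_eq_trans.
#[global] Instance ser_eq_Equiv : Equivalence ser_eq := ser_setoid.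

#[global] Instance sadd_Proper : Proper (ser_eq ==> ser_eq ==> ser_eq) sadd.
Proof. intros f f' Hf g g' Hg i s x t. rewrite !coef_sadd, Hf, Hg; reflexivity. Qed.
#[global] Instance sopp_Proper : Proper (ser_eq ==> ser_eq) sopp.
Proof. intros f f' Hf i s x t. rewrite !coef_sopp, Hf; reflexivity. Qed.
#[global] Instance ssub_Proper : Proper (ser_eq ==> ser_eq ==> ser_eq) ssub.
Proof. intros f f' Hf g g' Hg i s x t. rewrite !coef_ssub, Hf, Hg; reflexivity. Qed.
#[global] Instance smul_Proper : Proper (ser_eq ==> ser_eq ==> ser_eq) smul.
Proof.
  intros f f' Hf g g' Hg m s x t.
  rewrite (coef_smul_cover f g (sdeg f) (sdeg g)) by apply deg_le_sdeg.
  rewrite (coef_smul_cover f' g' (sdeg f) (sdeg g)).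
  - apply sumZ_ext. intros. rewrite Hf, Hg. reflexivity.
  - apply (deg_le_eq f); auto; apply deg_le_sdeg.
  - apply (deg_le_eq g); auto; apply deg_le_sdeg.
Qed.
#[global] Instance sdk_Proper : Proper (ser_eq ==> ser_eq) sdk.
Proof. intros f f' Hf i s x t. rewrite !coef_sdk, Hf; reflexivity. Qed.
#[global] Instance spos_Proper : Proper (ser_eq ==> ser_eq) spos.
Proof. intros f f' Hf i s x t. rewrite !coef_spos, Hf; reflexivity. Qed.
#[global] Instance snneg_Proper : Proper (ser_eq ==> ser_eq) snneg.
Proof. intros f f' Hf i s x t. rewrite !coef_snneg, Hf; reflexivity. Qed.
Lemma sscale_Proper c c' f f' : (forall s x t, c s x t = c' s x t) -> ser_eq f f' -> ser_eq (sscale c f) (sscale c' f').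
Proof. intros Hc Hf i s x t. rewrite !coef_sscale, Hc, Hf; reflexivity. Qed.
#[global] Instance sscale_Proper' c : Proper (ser_eq ==> ser_eq) (sscale c).
Proof. intros f f' Hf. apply sscale_Proper; auto. Qed.

Lemma coef_fun_eq f g : ser_eq f g -> forall i, coef f i = coef g i.
Proof.
  intros H i. apply functional_extensionality; intros s; apply functional_extensionality; intros x; apply functional_extensionality; intros t. apply H.
Qed.

Lemma smap_eq D f f' : D zeroF = zeroF -> ser_eq f f' -> ser_eq (smap D f) (smap D f').
Proof.
  intros HD Hf i s x t. rewrite !coef_smap by auto. rewrite (coef_fun_eq f f' Hf). reflexivity.
Qed.

Lemma sadd_0_l f : ser_eq (sadd szero f) f.
Proof. intros i s x t. rewrite coef_sadd, coef_szero. ring. Qed.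
Lemma sadd_comm f g : ser_eq (sadd f g) (sadd g f).
Proof. intros i s x t. rewrite !coef_sadd. ring. Qed.
Lemma sadd_assoc f g h : ser_eq (sadd f (sadd g h)) (sadd (sadd f g) h).
Proof. intros i s x t. rewrite !coef_sadd. ring. Qed.
Lemma sopp_def f : ser_eq (sadd f (sopp f)) szero.
Proof. intros i s x t. rewrite coef_sadd, coef_sopp, coef_szero. ring. Qed.

Lemma smul_1_l f : ser_eq (smul sone f) f.
Proof.
  intros m s x t.
  rewrite (coef_smul_gen sone f 0 (sdeg f) m (Z.min 0 (m - sdeg f)) (Z.to_nat (1 - Z.min 0 (m - sdeg f))))
    by (try apply deg_le_monoS; try apply deg_le_sdeg; lia).
  assert (Hs : supp_in (fun i => coef sone i s x t * coef f (m - i) s x t) 0 0).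
  { intros i Hi. rewrite coef_sone. destruct (Z.eqb_spec i 0); [lia|ring]. }
  rewrite (sum_cover _ 0 0 _ _ Hs) by lia. change (Z.to_nat (0 - 0 + 1)) with 1%nat. rewrite sumZ_S, sumZ_0, coef_sone. simpl.
  replace (m - 0)%Z with m by lia. ring.
Qed.

Lemma smul_comm f g : ser_eq (smul f g) (smul g f).
Proof.
  intros m s x t.
  rewrite (coef_smul_cover f g (sdeg f) (sdeg g)) by apply deg_le_sdeg.
  rewrite (coef_smul_cover g f (sdeg g) (sdeg f)) by apply deg_le_sdeg.
  assert (R := sumZ_refl (m - sdeg f) (Z.to_nat (sdeg g - (m - sdeg f) + 1)) m (fun i => coef f i s x t * coef g (m - i) s x t)). cbv beta in R.
  rewrite (sumZ_ext (m - sdeg f) _ _ (fun j => coef f (m - j) s x t * coef g (m - (m - j)) s x t)).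
  2:{ intros j _. replace (m - (m - j))%Z with j by lia. ring. }
  rewrite R.
  replace (Z.to_nat (sdeg g - (m - sdeg f) + 1)) with (Z.to_nat (sdeg f - (m - sdeg g) + 1)) by lia.
  destruct (Z.to_nat (sdeg f - (m - sdeg g) + 1)) eqn:E; [reflexivity|].
  f_equal. lia.
Qed.

Lemma smul_assoc f g h : ser_eq (smul f (smul g h)) (smul (smul f g) h).
Proof.
  intros m s x t.
  set (df := sdeg f). set (dg := sdeg g). set (dh := sdeg h).
  assert (Hf : deg_le f df) by apply deg_le_sdeg.
  assert (Hg : deg_le g dg) by apply deg_le_sdeg.
  assert (Hh : deg_le h dh) by apply deg_le_sdeg.
  set (N1 := Z.to_nat (df + dg - (m - dh) + 1)).
  set (N2 := Z.to_nat (df - (m - dh - dg) + 1)).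
  rewrite (coef_smul_gen (smul f g) h (df + dg) dh m (m - dh) N1) by (try apply deg_le_smul; auto; lia).
  rewrite (sumZ_ext _ _ _ (fun i => sumZ (m - dh - dg) N2 (fun j => coef f j s x t * coef g (i - j) s x t * coef h (m - i) s x t))).
  2:{ intros i Hi. rewrite (coef_smul_gen f g df dg i (m - dh - dg) N2) by (auto; lia).
      rewrite sumZ_scalr. reflexivity. }
  rewrite sumZ_swap.
  rewrite (coef_smul_gen f (smul g h) df (dg + dh) m (m - dh - dg) N2) by (try apply deg_le_smul; auto; lia).
  apply sumZ_ext. intros j Hj.
  rewrite (coef_smul_gen g h dg dh (m - j) (m - dh - j) N1) by (auto; lia).
  rewrite <- sumZ_scal.
  assert (E : forall F, sumZ (m - dh) N1 F = sumZ (m - dh - j) N1 (fun l => F (l + j)%Z)).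
  { intros F. rewrite sumZ_shift. f_equal. lia. }
  rewrite E.
  apply sumZ_ext. intros l _. replace (l + j - j)%Z with l by lia. replace (m - (l + j))%Z with (m - j - l)%Z by lia. ring.
Qed.

Lemma smul_distr_l f g h : ser_eq (smul (sadd f g) h) (sadd (smul f h) (smul g h)).
Proof.
  intros m s x t. rewrite coef_sadd.
  set (d := Z.max (sdeg f) (sdeg g)).
  assert (Hf : deg_le f d) by (apply (deg_le_mono _ (sdeg f)); [apply deg_le_sdeg|lia]).
  assert (Hg : deg_le g d) by (apply (deg_le_mono _ (sdeg g)); [apply deg_le_sdeg|lia]).
  assert (Hh : deg_le h (sdeg h)) by apply deg_le_sdeg.
  rewrite (coef_smul_cover (sadd f g) h d (sdeg h)) by (try apply deg_le_sadd; auto).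
  rewrite (coef_smul_cover f h d (sdeg h)) by auto.
  rewrite (coef_smul_cover g h d (sdeg h)) by auto.
  rewrite <- sumZ_plus. apply sumZ_ext. intros. rewrite coef_sadd. ring.
Qed.

Lemma ser_ring_theory : ring_theory szero sone sadd smul ssub sopp ser_eq.
Proof.
  constructor.
  - apply sadd_0_l.
  - apply sadd_comm.
  - apply sadd_assoc.
  - apply smul_1_l.
  - apply smul_comm.
  - apply smul_assoc.
  - apply smul_distr_l.
  - intros; reflexivity.
  - apply sopp_def.
Qed.

Lemma ser_ring_ext : ring_eq_ext sadd smul sopp ser_eq.
Proof. constructor; try apply sadd_Proper; try apply smul_Proper; apply sopp_Proper. Qed.

Add Ring serRing : ser_ring_theory (setoid ser_setoid ser_ring_ext).

Lemma test_ring f g : ser_eq (smul (sadd f g) (sadd f g)) (sadd (smul f f) (sadd (smul (smul f g) (sadd sone sone)) (smul g g))).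
Proof. ring. Qed.

Lemma coef_smul_monoS_l d c f i s x t :
  coef (smul (monoS d c) f) i s x t = c s x t * coef f (i - d) s x t.
Proof.
  rewrite (coef_smul_gen (monoS d c) f d (sdeg f) i (Z.min d (i - sdeg f)) (Z.to_nat (d + 1 - Z.min d (i - sdeg f))))
    by (try apply deg_le_monoS; try apply deg_le_sdeg; lia).
  assert (Hs : supp_in (fun j => coef (monoS d c) j s x t * coef f (i - j) s x t) d d).
  { intros j Hj. rewrite coef_monoS. destruct (Z.eqb_spec j d); [lia|ring]. }
  rewrite (sum_cover _ d d _ _ Hs) by lia. replace (Z.to_nat (d - d + 1)) with 1%nat by lia.
  rewrite sumZ_S, sumZ_0, coef_monoS, Z.eqb_refl. ring.
Qed.

Lemma sscale_as c f : ser_eq (sscale c f) (smul (monoS 0 c) f).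
Proof. intros i s x t. rewrite coef_sscale, coef_smul_monoS_l. f_equal. f_equal. lia. Qed.

Lemma monoS_ext d c c' : (forall s x t, c s x t = c' s x t) -> ser_eq (monoS d c) (monoS d c').
Proof. intros H i s x t. rewrite !coef_monoS. destruct (i =? d)%Z; auto. Qed.

Lemma monoS_mul d e c c' : ser_eq (smul (monoS d c) (monoS e c')) (monoS (d + e) (fun s x t => c s x t * c' s x t)).
Proof.
  intros i s x t. rewrite coef_smul_monoS_l, !coef_monoS.
  destruct (Z.eqb_spec (i - d) e), (Z.eqb_spec i (d + e)); try lia; ring.
Qed.

Lemma monoS_add d c c' : ser_eq (sadd (monoS d c) (monoS d c')) (monoS d (fun s x t => c s x t + c' s x t)).
Proof. intros i s x t. rewrite coef_sadd, !coef_monoS. destruct (i =? d)%Z; ring. Qed.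

Lemma monoS_opp d c : ser_eq (sopp (monoS d c)) (monoS d (fun s x t => - c s x t)).
Proof. intros i s x t. rewrite coef_sopp, !coef_monoS. destruct (i =? d)%Z; ring. Qed.

Lemma monoS_zero d : ser_eq (monoS d zeroF) szero.
Proof. intros i s x t. rewrite coef_szero, !coef_monoS. destruct (i =? d)%Z; reflexivity. Qed.

Lemma monoS_one : ser_eq (monoS 0 (constF 1)) sone.
Proof. reflexivity. Qed.

Lemma sdk_add f g : ser_eq (sdk (sadd f g)) (sadd (sdk f) (sdk g)).
Proof. intros i s x t. rewrite !coef_sdk, !coef_sadd, !coef_sdk. ring. Qed.
Lemma sdk_opp f : ser_eq (sdk (sopp f)) (sopp (sdk f)).
Proof. intros i s x t. rewrite !coef_sdk, !coef_sopp, !coef_sdk. ring. Qed.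
Lemma sdk_sub f g : ser_eq (sdk (ssub f g)) (ssub (sdk f) (sdk g)).
Proof. intros i s x t. rewrite !coef_sdk, !coef_ssub, !coef_sdk. ring. Qed.
Lemma sdk_sscale c f : ser_eq (sdk (sscale c f)) (sscale c (sdk f)).
Proof. intros i s x t. rewrite !coef_sdk, !coef_sscale, !coef_sdk. ring. Qed.
Lemma sdk_monoS d c : ser_eq (sdk (monoS d c)) (monoS (d - 1) (fun s x t => IZR d * c s x t)).
Proof.
  intros i s x t. rewrite coef_sdk, !coef_monoS.
  destruct (Z.eqb_spec (i+1) d), (Z.eqb_spec i (d - 1)); try lia; try ring. subst. ring.
Qed.
Lemma sdk_sone : ser_eq (sdk sone) szero.
Proof. unfold sone. rewrite sdk_monoS. intros i s x t. rewrite coef_monoS, coef_szero. destruct (_ =? _)%Z; simpl; ring. Qed.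
Lemma sdk_szero : ser_eq (sdk szero) szero.
Proof. intros i s x t. rewrite coef_sdk, !coef_szero. ring. Qed.

Lemma sdk_mul f g : ser_eq (sdk (smul f g)) (sadd (smul (sdk f) g) (smul f (sdk g))).
Proof.
  intros m s x t. rewrite coef_sdk, coef_sadd.
  set (df := sdeg f). set (dg := sdeg g).
  assert (Hf : deg_le f df) by apply deg_le_sdeg.
  assert (Hg : deg_le g dg) by apply deg_le_sdeg.
  set (lo := (m - dg)%Z). set (n := Z.to_nat (df - lo + 2)).
  rewrite (coef_smul_gen f g df dg (m+1) lo n) by (auto; unfold lo, n; lia).
  rewrite (coef_smul_gen (sdk f) g (df - 1) dg m (lo - 1) n) by (try apply deg_le_sdk; auto; unfold lo, n; lia).
  rewrite (coef_smul_gen f (sdk g) df (dg - 1) m lo n) by (try apply deg_le_sdk; auto; unfold lo, n; lia).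
  replace (lo - 1)%Z with (lo + -1)%Z by lia. rewrite <- sumZ_shift.
  rewrite <- sumZ_plus, <- sumZ_scal. apply sumZ_ext. intros i _.
  rewrite !coef_sdk. replace (i + -1 + 1)%Z with i by lia. replace (m - (i + -1))%Z with (m + 1 - i)%Z by lia.
  replace (m - i + 1)%Z with (m + 1 - i)%Z by lia.
  replace (IZR (m + 1 - i)) with (IZR (m+1) - IZR i) by (rewrite minus_IZR; reflexivity). ring.
Qed.

Lemma spow_S f n : spow f (S n) = smul f (spow f n).
Proof. reflexivity. Qed.
Lemma spow_0 f : spow f 0 = sone.
Proof. reflexivity. Qed.

#[global] Instance spow_Proper : Proper (ser_eq ==> eq ==> ser_eq) spow.
Proof. intros f f' Hf n n' <-. induction n; [reflexivity|]. rewrite !spow_S, IHn, Hf. reflexivity. Qed.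

Lemma deg_le_spow f d n : deg_le f d -> deg_le (spow f n) (Z.of_nat n * d).
Proof.
  intros Hf. induction n.
  - simpl. apply deg_le_monoS.
  - rewrite spow_S. apply (deg_le_mono _ (d + Z.of_nat n * d)). apply deg_le_smul; auto. lia.
Qed.

Lemma deg_le_sone : deg_le sone 0.
Proof. apply deg_le_monoS. Qed.

Definition prodf (z : Z) (j : nat) : R := fold_right Rmult 1 (map (fun l => IZR z - INR l) (seq 0 j)).

Lemma prodf_Sr z j : prodf z (S j) = prodf z j * (IZR z - INR j).
Proof.
  unfold prodf. rewrite seq_S, map_app, fold_right_app. simpl.
  generalize (map (fun l => IZR z - INR l) (seq 0 j)). intros l.
  rewrite Rmult_1_r. induction l; simpl; [ring|]. rewrite IHl. ring.
Qed.

Lemma prodf_Sl z j : prodf z (S j) = IZR z * prodf (z - 1) j.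
Proof.
  induction j.
  - unfold prodf; simpl. ring.
  - rewrite prodf_Sr, IHj, prodf_Sr, minus_IZR, S_INR. simpl. ring.
Qed.

Lemma gbinom_0 z : gbinom z 0 = 1.
Proof. unfold gbinom; simpl. field. Qed.

Lemma gbinom_eq z j : gbinom z j = prodf z j / INR (fact j).
Proof. reflexivity. Qed.

Lemma INR_fact_nz j : INR (fact j) <> 0.
Proof. apply not_0_INR. apply fact_neq_0. Qed.

Lemma gbinom_Sr z j : gbinom z (S j) = gbinom z j * (IZR z - INR j) / INR (S j).
Proof.
  rewrite !gbinom_eq, prodf_Sr. rewrite fact_simpl, mult_INR.
  field. split; [apply INR_fact_nz|]. apply not_0_INR. lia.
Qed.

Lemma gbinom_pascal z j : gbinom (z + 1) (S j) = gbinom z (S j) + gbinom z j.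
Proof.
  rewrite !gbinom_eq, prodf_Sl, prodf_Sr. replace (z + 1 - 1)%Z with z by lia.
  rewrite fact_simpl, mult_INR, plus_IZR, S_INR.
  field. split; [apply INR_fact_nz|]. pose proof (pos_INR j). lra.
Qed.

Lemma gbinom_abs z j : (IZR z + 1 - INR j) * gbinom (z + 1) j = (IZR z + 1) * gbinom z j.
Proof.
  rewrite !gbinom_eq.
  assert (H1 : prodf (z+1) (S j) = prodf (z+1) j * (IZR z + 1 - INR j)) by (rewrite prodf_Sr, plus_IZR; ring).
  assert (H2 : prodf (z+1) (S j) = (IZR z + 1) * prodf z j) by (rewrite prodf_Sl, plus_IZR; replace (z+1-1)%Z with z by lia; ring).
  assert (E : (IZR z + 1 - INR j) * prodf (z+1) j = (IZR z + 1) * prodf z j) by (rewrite <- H2, H1; ring).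
  unfold Rdiv. rewrite <- !Rmult_assoc, E. ring.
Qed.

Lemma gbinom_low z j : INR (S j) * gbinom z (S j) = IZR z * gbinom (z - 1) j.
Proof.
  rewrite !gbinom_eq, prodf_Sl, fact_simpl, mult_INR.
  field. split; [apply INR_fact_nz|]. apply not_0_INR. lia.
Qed.

Lemma gbinom_van z j : (0 <= z < Z.of_nat j)%Z -> gbinom z j = 0.
Proof.
  induction j; intros H; [lia|].
  rewrite gbinom_Sr. destruct (Z.eq_dec z (Z.of_nat j)).
  - subst. rewrite <- INR_IZR_INZ. unfold Rdiv. ring.
  - rewrite IHj by lia. unfold Rdiv; ring.
Qed.

Definition gbZ (z j : Z) : R := if (j <? 0)%Z then 0 else gbinom z (Z.to_nat j).

Lemma gbZ_neg z j : (j < 0)%Z -> gbZ z j = 0.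
Proof. intros; unfold gbZ. destruct (Z.ltb_spec j 0); [reflexivity|lia]. Qed.
Lemma gbZ_nat z j : (0 <= j)%Z -> gbZ z j = gbinom z (Z.to_nat j).
Proof. intros; unfold gbZ. destruct (Z.ltb_spec j 0); [lia|reflexivity]. Qed.
Lemma gbZ_0 z : gbZ z 0 = 1.
Proof. rewrite gbZ_nat by lia. apply gbinom_0. Qed.
Lemma gbZ_van z j : (0 <= z < j)%Z -> gbZ z j = 0.
Proof. intros. rewrite gbZ_nat by lia. apply gbinom_van. lia. Qed.

Lemma gbZ_pascal z j : gbZ (z + 1) j = gbZ z j + gbZ z (j - 1).
Proof.
  destruct (Z_lt_le_dec j 0). { rewrite !gbZ_neg by lia. ring. }
  destruct (Z.eq_dec j 0). { subst. rewrite !gbZ_0, gbZ_neg by lia. ring. }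
  rewrite !gbZ_nat by lia. replace (Z.to_nat j) with (S (Z.to_nat (j - 1))) by lia.
  apply gbinom_pascal.
Qed.

Lemma gbZ_zero_l j : gbZ 0 j = if (j =? 0)%Z then 1 else 0.
Proof.
  destruct (Z.eqb_spec j 0). { subst; apply gbZ_0. }
  destruct (Z_lt_le_dec j 0). { apply gbZ_neg; lia. } apply gbZ_van; lia.
Qed.

Definition Vs (x y J : Z) : R := sumZ 0 (Z.to_nat (J + 1)) (fun r => gbZ x r * gbZ y (J - r)).

Lemma Vs_supp x y J : supp_in (fun r => gbZ x r * gbZ y (J - r)) 0 J.
Proof. intros r Hr. destruct Hr. - rewrite gbZ_neg by lia; ring. - rewrite (gbZ_neg y) by lia; ring. Qed.

Lemma Vs_any x y J lo n : (lo <= 0)%Z -> (J < lo + Z.of_nat n)%Z ->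
  sumZ lo n (fun r => gbZ x r * gbZ y (J - r)) = Vs x y J.
Proof. intros. unfold Vs. apply (sum_indep _ 0 J); auto using Vs_supp; lia. Qed.

Lemma Vs_neg x y J : (J < 0)%Z -> Vs x y J = 0.
Proof. intros. unfold Vs. replace (Z.to_nat (J+1)) with 0%nat by lia. reflexivity. Qed.

Lemma Vs_step x y J : Vs (x + 1) y J = Vs x y J + Vs x y (J - 1).
Proof.
  destruct (Z_lt_le_dec J 0). { rewrite !Vs_neg by lia. ring. }
  unfold Vs at 1. rewrite (sumZ_ext _ _ _ (fun r => gbZ x r * gbZ y (J - r) + gbZ x (r - 1) * gbZ y (J - r))).
  2:{ intros. rewrite gbZ_pascal. ring. }
  rewrite sumZ_plus. rewrite (Vs_any x y J 0) by lia. f_equal.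
  rewrite <- (Vs_any x y (J - 1) (-1) (Z.to_nat (J + 1))) by lia.
  replace (-1)%Z with (0 + -1)%Z by lia. rewrite <- sumZ_shift. apply sumZ_ext. intros r _.
  replace (r + -1)%Z with (r - 1)%Z by lia. replace (J - 1 - (r - 1))%Z with (J - r)%Z by lia. reflexivity.
Qed.

Lemma Vs_zero y J : Vs 0 y J = gbZ y J.
Proof.
  destruct (Z_lt_le_dec J 0). { rewrite Vs_neg, gbZ_neg by lia. reflexivity. }
  unfold Vs. rewrite (sum_cover _ 0 0).
  - replace (Z.to_nat (0 - 0 + 1)) with 1%nat by lia. rewrite sumZ_S, sumZ_0, gbZ_0. rewrite Z.sub_0_r. ring.
  - intros r Hr. rewrite gbZ_zero_l. destruct (Z.eqb_spec r 0); [lia|ring].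
  - lia.
  - lia.
Qed.

Lemma vandermonde x y J : Vs x y J = gbZ (x + y) J.
Proof.
  revert J.
  induction x as [|p IHx|p IHx] using Z.peano_ind.
  - intros J. rewrite Vs_zero. reflexivity.
  - intros J. replace (Z.succ p) with (p + 1)%Z by lia. rewrite Vs_step, !IHx. replace (p + 1 + y)%Z with ((p + y) + 1)%Z by lia.
    rewrite gbZ_pascal. reflexivity.
  -
    intros J. assert (HJ : forall k : nat, Vs (Z.pred p) y (Z.of_nat k - 1) = gbZ (Z.pred p + y) (Z.of_nat k - 1)).
    { induction k.
      - rewrite Vs_neg, gbZ_neg by lia. reflexivity.
      - assert (E := Vs_step (Z.pred p) y (Z.of_nat (S k) - 1)).
        replace (Z.pred p + 1)%Z with p in E by lia. rewrite IHx in E.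
        replace (Z.of_nat (S k) - 1 - 1)%Z with (Z.of_nat k - 1)%Z in E by lia. rewrite IHk in E.
        assert (E2 := gbZ_pascal (Z.pred p + y) (Z.of_nat (S k) - 1)).
        replace (Z.pred p + y + 1)%Z with (p + y)%Z in E2 by lia.
        replace (Z.of_nat (S k) - 1 - 1)%Z with (Z.of_nat k - 1)%Z in E2 by lia. lra. }
    destruct (Z_lt_le_dec J 0). { rewrite Vs_neg, gbZ_neg by lia. reflexivity. }
    replace J with (Z.of_nat (Z.to_nat (J + 1)) - 1)%Z by lia. apply HJ.
Qed.

Lemma sum_single F b lo n : supp_in F b b -> (lo <= b)%Z -> (b < lo + Z.of_nat n)%Z -> sumZ lo n F = F b.
Proof.
  intros H H1 H2. rewrite (sum_cover F b b lo n) by auto. replace (Z.to_nat (b - b + 1)) with 1%nat by lia.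
  rewrite sumZ_S, sumZ_0. ring.
Qed.

Lemma sumZ_mul lo n F lo' n' G :
  sumZ lo n F * sumZ lo' n' G = sumZ lo n (fun i => sumZ lo' n' (fun j => F i * G j)).
Proof.
  rewrite <- sumZ_scalr. apply sumZ_ext. intros. rewrite sumZ_scal. reflexivity.
Qed.

Notation sh := sshift.

Lemma sumZ_shift_eq lo n c G F : (forall j, (lo <= j < lo + Z.of_nat n)%Z -> G j = F (j + c)%Z) ->
  sumZ lo n G = sumZ (lo + c) n F.
Proof. intros H. rewrite <- sumZ_shift. apply sumZ_ext; auto. Qed.

Lemma sumZ_refl_eq lo n m G F : (forall j, (lo <= j < lo + Z.of_nat n)%Z -> G j = F (m - j)%Z) ->
  sumZ lo n G = sumZ (m - (lo + Z.of_nat n - 1)) n F.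
Proof. intros H. rewrite <- sumZ_refl. apply sumZ_ext; auto. Qed.

Lemma coef_sh_gen f a df m lo n s x t : deg_le f df -> (lo <= m)%Z -> (df < lo + Z.of_nat n)%Z ->
  coef (sh f a) m s x t = sumZ lo n (fun i => coef f i s x t * gbZ i (i - m) * (- a s x t) ^ Z.to_nat (i - m)).
Proof.
  intros Hf H1 H2.
  assert (Hs : supp_in (fun i => coef f i s x t * gbZ i (i - m) * (- a s x t) ^ Z.to_nat (i - m)) m (Z.min df (sdeg f))).
  { intros i Hi. destruct (Z_lt_le_dec i m).
    - rewrite gbZ_neg by lia. ring.
    - destruct (Z_lt_le_dec df i).
      + rewrite (Hf i) by lia. ring.
      + rewrite (coef_hi f i) by lia. ring. }
  unfold coef at 1; simpl. destruct (Z.leb_spec m (sdeg f)).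
  - rewrite (sumZ_shift_eq 0 _ m _ (fun i => coef f i s x t * gbZ i (i - m) * (- a s x t) ^ Z.to_nat (i - m))).
    + apply (sum_indep _ _ _ _ _ _ _ Hs); lia.
    + intros j Hj. replace (j + m - m)%Z with j by lia. rewrite gbZ_nat by lia.
      replace (j + m)%Z with (m + j)%Z by lia. reflexivity.
  - unfold zeroF. symmetry. apply sumZ_zero. intros j Hj. apply Hs. lia.
Qed.

Lemma deg_le_sh f a d : deg_le f d -> deg_le (sh f a) d.
Proof.
  intros Hf m Hm s x t. rewrite (coef_sh_gen f a d m m 0) by (auto; lia). reflexivity.
Qed.

Lemma sh_top f a d s x t : deg_le f d -> coef (sh f a) d s x t = coef f d s x t.
Proof.
  intros Hf. rewrite (coef_sh_gen f a d d d 1) by (auto; lia). rewrite sumZ_S, sumZ_0.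
  replace (d - d)%Z with 0%Z by lia. rewrite gbZ_0. simpl. ring.
Qed.

#[global] Instance sh_Proper : Proper (ser_eq ==> eq ==> ser_eq) sshift.
Proof.
  intros f f' Hf a a' <- m s x t.
  assert (H' : deg_le f' (sdeg f)) by (apply (deg_le_eq f); auto; apply deg_le_sdeg).
  rewrite (coef_sh_gen f a (sdeg f) m m (Z.to_nat (sdeg f - m + 1))) by (try apply deg_le_sdeg; lia).
  rewrite (coef_sh_gen f' a (sdeg f) m m (Z.to_nat (sdeg f - m + 1))) by (auto; lia).
  apply sumZ_ext. intros. rewrite Hf. reflexivity.
Qed.

Lemma sh_add f g a : ser_eq (sh (sadd f g) a) (sadd (sh f a) (sh g a)).
Proof.
  intros m s x t. rewrite coef_sadd. set (d := Z.max (sdeg f) (sdeg g)).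
  assert (Hf : deg_le f d) by (apply (deg_le_mono _ (sdeg f)); [apply deg_le_sdeg|lia]).
  assert (Hg : deg_le g d) by (apply (deg_le_mono _ (sdeg g)); [apply deg_le_sdeg|lia]).
  rewrite (coef_sh_gen (sadd f g) a d m m (Z.to_nat (d - m + 1))) by (try apply deg_le_sadd; auto; lia).
  rewrite (coef_sh_gen f a d m m (Z.to_nat (d - m + 1))) by (auto; lia).
  rewrite (coef_sh_gen g a d m m (Z.to_nat (d - m + 1))) by (auto; lia).
  rewrite <- sumZ_plus. apply sumZ_ext. intros. rewrite coef_sadd. ring.
Qed.

Lemma sh_opp f a : ser_eq (sh (sopp f) a) (sopp (sh f a)).
Proof.
  intros m s x t. rewrite coef_sopp.
  rewrite (coef_sh_gen (sopp f) a (sdeg f) m m (Z.to_nat (sdeg f - m + 1))) by (try apply deg_le_sopp; try apply deg_le_sdeg; lia).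
  rewrite (coef_sh_gen f a (sdeg f) m m (Z.to_nat (sdeg f - m + 1))) by (try apply deg_le_sdeg; lia).
  rewrite <- sumZ_opp. apply sumZ_ext. intros. rewrite coef_sopp. ring.
Qed.

Lemma sh_sub f g a : ser_eq (sh (ssub f g) a) (ssub (sh f a) (sh g a)).
Proof. unfold ssub. rewrite sh_add, sh_opp. reflexivity. Qed.

Lemma sh_sscale c f a : ser_eq (sh (sscale c f) a) (sscale c (sh f a)).
Proof.
  intros m s x t. rewrite coef_sscale.
  rewrite (coef_sh_gen (sscale c f) a (sdeg f) m m (Z.to_nat (sdeg f - m + 1))) by (try apply deg_le_sscale; try apply deg_le_sdeg; lia).
  rewrite (coef_sh_gen f a (sdeg f) m m (Z.to_nat (sdeg f - m + 1))) by (try apply deg_le_sdeg; lia).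
  rewrite <- sumZ_scal. apply sumZ_ext. intros. rewrite coef_sscale. ring.
Qed.

Lemma sh_monoS0 c a : ser_eq (sh (monoS 0 c) a) (monoS 0 c).
Proof.
  intros m s x t. rewrite coef_monoS. destruct (Z_lt_le_dec 0 m).
  - rewrite (deg_le_sh _ a 0 (deg_le_monoS 0 c)) by lia. destruct (Z.eqb_spec m 0); [lia|reflexivity].
  - rewrite (coef_sh_gen (monoS 0 c) a 0 m m (Z.to_nat (1 - m))) by (try apply deg_le_monoS; lia).
    rewrite (sum_single _ 0). 2:{ intros i Hi; rewrite coef_monoS; destruct (Z.eqb_spec i 0); [lia|ring]. }
    2,3: lia.
    rewrite coef_monoS, Z.eqb_refl, gbZ_zero_l.
    destruct (Z.eqb_spec (0 - m) 0), (Z.eqb_spec m 0); try lia; subst; simpl; ring.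
Qed.

Lemma sh_sone a : ser_eq (sh sone a) sone.
Proof. apply sh_monoS0. Qed.

Lemma pow_Zcomb (A : R) u v : (0 <= u)%Z -> (0 <= v)%Z -> A ^ Z.to_nat u * A ^ Z.to_nat v = A ^ Z.to_nat (u + v).
Proof. intros. rewrite <- pow_add. f_equal. lia. Qed.

Lemma vdm_p i l m lo n (A : R) : (lo <= m - l)%Z -> (i < lo + Z.of_nat n)%Z ->
  sumZ lo n (fun p => gbZ i (i - p) * A ^ Z.to_nat (i - p) * (gbZ l (l - (m - p)) * A ^ Z.to_nat (l - (m - p))))
  = gbZ (i + l) (i + l - m) * A ^ Z.to_nat (i + l - m).
Proof.
  intros H1 H2.
  rewrite (sumZ_ext _ _ _ (fun p => A ^ Z.to_nat (i + l - m) * (gbZ i (i - p) * gbZ l (i + l - m - (i - p))))).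
  2:{ intros p _. replace (i + l - m - (i - p))%Z with (l - (m - p))%Z by lia.
      destruct (Z_lt_le_dec (i - p) 0). { rewrite gbZ_neg by lia. ring. }
      destruct (Z_lt_le_dec (l - (m - p)) 0). { rewrite (gbZ_neg l) by lia. ring. }
      replace (Z.to_nat (i + l - m)) with (Z.to_nat (i - p + (l - (m - p)))) by (f_equal; lia).
      rewrite <- (pow_Zcomb A (i - p) (l - (m - p))) by lia. ring. }
  rewrite sumZ_scal. rewrite Rmult_comm. f_equal.
  rewrite (sumZ_refl_eq lo n i _ (fun r => gbZ i r * gbZ l (i + l - m - r))).
  - rewrite Vs_any by lia. apply vandermonde.
  - intros j _. replace (i + l - m - (i - j))%Z with (i + l - m - (i - j))%Z by lia. reflexivity.
Qed.

Lemma sh_mul f g a : ser_eq (sh (smul f g) a) (smul (sh f a) (sh g a)).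
Proof.
  intros m s x t. set (A := - a s x t).
  set (df := sdeg f). set (dg := sdeg g).
  assert (Hf : deg_le f df) by apply deg_le_sdeg.
  assert (Hg : deg_le g dg) by apply deg_le_sdeg.
  set (NN := Z.to_nat (df + dg - m + 1)).
  set (NI := Z.to_nat (df - (m - dg) + 1)).
  set (NL := Z.to_nat (dg - (m - df) + 1)).
  rewrite (coef_sh_gen (smul f g) a (df + dg) m m NN) by (try apply deg_le_smul; auto; unfold NN; lia).
  rewrite (sumZ_ext _ _ _ (fun n' => sumZ (m - dg) NI (fun i => coef f i s x t * coef g (n' - i) s x t * (gbZ n' (n' - m) * A ^ Z.to_nat (n' - m))))).
  2:{ intros n' Hn. cbv beta. rewrite sumZ_scalr. rewrite (coef_smul_gen f g df dg n' (m - dg) NI) by (auto; unfold NI; lia). fold A. ring. }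
  rewrite sumZ_swap.
  rewrite (coef_smul_gen (sh f a) (sh g a) df dg m (m - dg) NI) by (try apply deg_le_sh; auto; unfold NI; lia).
  rewrite (sumZ_ext (m - dg) NI (fun p => coef (sh f a) p s x t * coef (sh g a) (m - p) s x t) (fun p => sumZ (m - dg) NI (fun i => sumZ (m - df) NL (fun l =>
      coef f i s x t * gbZ i (i - p) * A ^ Z.to_nat (i - p) * (coef g l s x t * gbZ l (l - (m - p)) * A ^ Z.to_nat (l - (m - p))))))).
  2:{ intros p Hp. cbv beta. rewrite (coef_sh_gen f a df p (m - dg) NI) by (auto; unfold NI; lia).
      rewrite (coef_sh_gen g a dg (m - p) (m - df) NL) by (auto; unfold NL; lia).
      rewrite sumZ_mul. reflexivity. }
  rewrite (sumZ_swap (m - dg) NI (m - dg) NI). apply sumZ_ext. intros i Hi.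
  rewrite sumZ_swap.
  rewrite (sumZ_ext (m - df) NL _ (fun l => coef f i s x t * (coef g l s x t * (gbZ (i + l) (i + l - m) * A ^ Z.to_nat (i + l - m))))).
  2:{ intros l Hl. cbv beta. rewrite <- (vdm_p i l m (m - dg) NI A) by (unfold NI, NL in *; lia).
      rewrite <- sumZ_scal, <- sumZ_scal. apply sumZ_ext. intros. ring. }
  assert (E : forall F, sumZ m NN F = sumZ (m - i) NN (fun l => F (l + i)%Z)).
  { intros F. rewrite sumZ_shift. f_equal. lia. }
  rewrite E.
  transitivity (sumZ (m - i) NN (fun l => coef f i s x t * (coef g l s x t * (gbZ (i + l) (i + l - m) * A ^ Z.to_nat (i + l - m))))).
  { apply sumZ_ext. intros l _. replace (l + i - i)%Z with l by lia. replace (l + i)%Z with (i + l)%Z by lia. ring. }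
  apply (sum_indep _ (m - i) dg).
  - intros l Hl. destruct Hl.
    + rewrite gbZ_neg by lia. ring.
    + rewrite (Hg l) by lia. ring.
  - lia.
  - unfold NN, NI in *. lia.
  - unfold NI in *. lia.
  - unfold NL, NI in *. lia.
Qed.

Lemma sh_spow f a n : ser_eq (sh (spow f n) a) (spow (sh f a) n).
Proof.
  induction n.
  - apply sh_sone.
  - rewrite !spow_S, sh_mul, IHn. reflexivity.
Qed.

Lemma gbZ_abs z j : (IZR z + 1 - IZR j) * gbZ (z + 1) j = (IZR z + 1) * gbZ z j.
Proof.
  destruct (Z_lt_le_dec j 0). { rewrite !gbZ_neg by lia. ring. }
  rewrite !gbZ_nat by lia. rewrite <- gbinom_abs. rewrite INR_IZR_INZ. rewrite Z2Nat.id by lia. ring.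
Qed.

Lemma sdk_sh f a : ser_eq (sdk (sh f a)) (sh (sdk f) a).
Proof.
  intros m s x t. rewrite coef_sdk. set (d := sdeg f).
  assert (Hf : deg_le f d) by apply deg_le_sdeg.
  set (N := Z.to_nat (d - m)).
  rewrite (coef_sh_gen f a d (m + 1) (m + 1) N) by (auto; unfold N; lia).
  rewrite (coef_sh_gen (sdk f) a (d - 1) m m N) by (try apply deg_le_sdk; auto; unfold N; lia).
  rewrite (sumZ_shift_eq m N 1 _ (fun i => IZR i * coef f i s x t * gbZ (i - 1) (i - 1 - m) * (- a s x t) ^ Z.to_nat (i - 1 - m))).
  2:{ intros j _. rewrite coef_sdk. replace (j + 1 - 1)%Z with j by lia. ring. }
  rewrite <- sumZ_scal. apply sumZ_ext. intros i Hi.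
  replace (i - 1 - m)%Z with (i - (m + 1))%Z by lia.
  assert (E := gbZ_abs (i - 1) (i - (m + 1))). replace (i - 1 + 1)%Z with i in E by lia.
  replace (IZR (i - 1) + 1 - IZR (i - (m + 1))) with (IZR m + 1) in E by (rewrite !minus_IZR, plus_IZR; simpl; ring).
  replace (IZR (i - 1) + 1) with (IZR i) in E by (rewrite !minus_IZR; simpl; ring).
  rewrite plus_IZR. simpl (IZR 1).
  transitivity ((IZR m + 1) * gbZ i (i - (m + 1)) * (coef f i s x t * (- a s x t) ^ Z.to_nat (i - (m + 1)))).
  { ring. } rewrite E. ring.
Qed.

Lemma regular_ext f g : (forall s x t, f s x t = g s x t) -> regular f -> regular g.
Proof.
  intros E H. replace g with f; auto.
  apply functional_extensionality; intros s; apply functional_extensionality; intros x;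
  apply functional_extensionality; intros t; auto.
Qed.

Lemma regular_op2 (op : R -> R -> R)
  (Hop : forall (F G : R -> R) y, ex_derive F y -> ex_derive G y -> ex_derive (fun z => op (F z) (G z)) y)
  f g : regular f -> regular g -> regular (fun s x t => op (f s x t) (g s x t)).
Proof.
  intros Hf Hg s x t. destruct (Hf s x t) as (A1&A2&A3), (Hg s x t) as (B1&B2&B3).
  split; [|split]; [apply Hop; auto | apply Hop; auto | intros m; apply Hop; auto].
Qed.

Lemma regular_op1 (op : R -> R)
  (Hop : forall (F : R -> R) y, ex_derive F y -> ex_derive (fun z => op (F z)) y)
  f : regular f -> regular (fun s x t => op (f s x t)).
Proof.
  intros Hf s x t. destruct (Hf s x t) as (A1&A2&A3).
  split; [|split]; [apply Hop; auto | apply Hop; auto | intros m; apply Hop; auto].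
Qed.

Lemma regular_plus f g : regular f -> regular g -> regular (fun s x t => f s x t + g s x t).
Proof. apply regular_op2. intros. apply (ex_derive_plus F G); auto. Qed.
Lemma regular_mult f g : regular f -> regular g -> regular (fun s x t => f s x t * g s x t).
Proof. apply regular_op2. intros. apply (ex_derive_mult F G); auto. Qed.
Lemma regular_opp f : regular f -> regular (fun s x t => - f s x t).
Proof. apply (regular_op1 (fun z => - z)). intros. apply (ex_derive_opp F); auto. Qed.
Lemma regular_minus f g : regular f -> regular g -> regular (fun s x t => f s x t - g s x t).
Proof. apply regular_op2. intros. apply (ex_derive_minus F G); auto. Qed.
Lemma regular_pow f n : regular f -> regular (fun s x t => f s x t ^ n).
Proof. apply (regular_op1 (fun z => z ^ n)). intros. apply (ex_derive_pow F); auto. Qed.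
Lemma regular_scal c f : regular f -> regular (fun s x t => c * f s x t).
Proof. apply (regular_op1 (fun z => c * z)). intros. apply (ex_derive_scal F); auto. Qed.
Lemma regular_const c : regular (fun _ _ _ => c).
Proof. intros s x t. split; [|split]; [apply ex_derive_const|apply ex_derive_const|intros; apply ex_derive_const]. Qed.
Lemma regular_zeroF : regular zeroF.
Proof. apply regular_const. Qed.
Lemma regular_constF c : regular (constF c).
Proof. apply regular_const. Qed.

Lemma regular_inv f : regular f -> (forall s x t, f s x t <> 0) -> regular (fun s x t => / f s x t).
Proof.
  intros Hf Hn s x t. destruct (Hf s x t) as (A1&A2&A3).
  split; [|split]; [apply ex_derive_inv; auto | apply ex_derive_inv; auto | intros m; apply ex_derive_inv; auto].
Qed.

Lemma regular_sumZ lo n (F : Z -> Defs.Fn) : (forall j, regular (F j)) ->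
  regular (fun s x t => sumZ lo n (fun j => F j s x t)).
Proof.
  intros H. revert lo; induction n; intros lo.
  - apply (regular_ext (fun _ _ _ => 0)); [intros; reflexivity|apply regular_const].
  - apply (regular_ext (fun s x t => F lo s x t + sumZ (lo + 1) n (fun j => F j s x t))).
    + intros. rewrite sumZ_S. reflexivity.
    + apply regular_plus; auto.
Qed.

Record Der (D : Defs.Fn -> Defs.Fn) : Prop := {
  D_const : forall c s x t, D (fun _ _ _ => c) s x t = 0;
  D_plus : forall f g, regular f -> regular g -> forall s x t,
      D (fun s x t => f s x t + g s x t) s x t = D f s x t + D g s x t;
  D_mult : forall f g, regular f -> regular g -> forall s x t,
      D (fun s x t => f s x t * g s x t) s x t = D f s x t * g s x t + f s x t * D g s x t;
  D_scal : forall c f s x t, D (fun s x t => c * f s x t) s x t = c * D f s x t;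
  D_opp : forall f s x t, D (fun s x t => - f s x t) s x t = - D f s x t;
  D_pow : forall f n, regular f -> forall s x t,
      D (fun s x t => f s x t ^ n) s x t = INR n * D f s x t * f s x t ^ Nat.pred n;
  D_inv : forall f, regular f -> (forall s x t, f s x t <> 0) -> forall s x t,
      D (fun s x t => / f s x t) s x t = - D f s x t / (f s x t) ^ 2;
  D_ln : forall f, regular f -> (forall s x t, f s x t <> 0) -> forall s x t,
      D (fun s x t => ln (Rabs (f s x t))) s x t = D f s x t / f s x t
}.

Lemma Derive_ln_abs (F : R -> R) y : ex_derive F y -> F y <> 0 ->
  Derive (fun z => ln (Rabs (F z))) y = Derive F y / F y.
Proof.
  intros H Hn. apply is_derive_unique.
  assert (HF : is_derive F y (Derive F y)) by (apply Derive_correct; auto).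
  assert (HA := is_derive_Rabs F y _ HF Hn).
  assert (Hp : 0 < Rabs (F y)) by (apply Rabs_pos_lt; auto).
  assert (HL := is_derive_ln _ Hp).
  assert (HC := is_derive_comp ln (fun z => Rabs (F z)) y _ _ HL HA).
  replace (Derive F y / F y) with (scal (sign (F y) * Derive F y) (/ Rabs (F y))); auto.
  unfold scal; simpl; unfold mult; simpl.
  destruct (Rlt_or_le 0 (F y)).
  - rewrite sign_eq_1, Rabs_pos_eq by lra. field; auto.
  - rewrite sign_eq_m1, Rabs_left by lra. field; auto.
Qed.

Ltac der_tac :=
  constructor;
  [ intros; apply Derive_const
  | intros f g Hf Hg s x t; destruct (Hf s x t) as (?&?&?), (Hg s x t) as (?&?&?); apply Derive_plus; auto
  | intros f g Hf Hg s x t; destruct (Hf s x t) as (?&?&?), (Hg s x t) as (?&?&?); apply Derive_mult; auto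
  | intros; apply Derive_scal
  | intros; apply Derive_opp
  | intros f n Hf s x t; destruct (Hf s x t) as (?&?&?); apply Derive_pow; auto
  | intros f Hf Hn s x t; destruct (Hf s x t) as (?&?&?); apply Derive_inv; auto
  | intros f Hf Hn s x t; destruct (Hf s x t) as (?&?&?); apply Derive_ln_abs; auto ].

Lemma Der_dS : Der dS.
Proof. unfold dS. der_tac. Qed.
Lemma Der_dX : Der dX.
Proof. unfold dX. der_tac. Qed.

Lemma upd_same t m : upd t m (t m) = t.
Proof. apply functional_extensionality. intros k. unfold upd. destruct (Nat.eqb_spec k m); subst; auto. Qed.
Lemma upd_at t m y : upd t m y m = y.
Proof. unfold upd. rewrite Nat.eqb_refl. auto. Qed.

Lemma Der_dT n : Der (dT n).
Proof.
  unfold dT. constructor.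
  - intros; apply Derive_const.
  - intros f g Hf Hg s x t. destruct (Hf s x t) as (?&?&A1), (Hg s x t) as (?&?&B1). apply Derive_plus; auto.
  - intros f g Hf Hg s x t. destruct (Hf s x t) as (?&?&A1), (Hg s x t) as (?&?&B1). rewrite Derive_mult; auto. rewrite upd_same. reflexivity.
  - intros; apply Derive_scal.
  - intros; apply Derive_opp.
  - intros f k Hf s x t. destruct (Hf s x t) as (?&?&A1). rewrite Derive_pow; auto. cbv beta. rewrite upd_same. reflexivity.
  - intros f Hf Hn s x t. destruct (Hf s x t) as (?&?&A1). rewrite Derive_inv; [cbv beta; rewrite upd_same; reflexivity|auto|cbv beta; rewrite upd_same; auto].
  - intros f Hf Hn s x t. destruct (Hf s x t) as (?&?&A1). rewrite Derive_ln_abs; [cbv beta; rewrite upd_same; reflexivity|auto|cbv beta; rewrite upd_same; auto].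
Qed.

Lemma fn_ext (f g : Defs.Fn) : (forall s x t, f s x t = g s x t) -> f = g.
Proof.
  intros H. apply functional_extensionality; intros s; apply functional_extensionality; intros x;
  apply functional_extensionality; intros t; auto.
Qed.

Lemma rs_eq f g : ser_eq f g -> regular_ser f -> regular_ser g.
Proof. intros E H i. rewrite <- (coef_fun_eq f g E). auto. Qed.
Lemma rs_sadd f g : regular_ser f -> regular_ser g -> regular_ser (sadd f g).
Proof. intros Hf Hg i. apply (regular_ext (fun s x t => coef f i s x t + coef g i s x t)). intros; rewrite coef_sadd; auto. apply regular_plus; auto. Qed.
Lemma rs_sopp f : regular_ser f -> regular_ser (sopp f).
Proof. intros Hf i. apply (regular_ext (fun s x t => - coef f i s x t)). intros; rewrite coef_sopp; auto. apply regular_opp; auto. Qed.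
Lemma rs_ssub f g : regular_ser f -> regular_ser g -> regular_ser (ssub f g).
Proof. intros; apply rs_sadd; auto; apply rs_sopp; auto. Qed.
Lemma rs_sscale c f : regular c -> regular_ser f -> regular_ser (sscale c f).
Proof. intros Hc Hf i. apply (regular_ext (fun s x t => c s x t * coef f i s x t)). intros; rewrite coef_sscale; auto. apply regular_mult; auto. Qed.
Lemma rs_monoS d c : regular c -> regular_ser (monoS d c).
Proof. intros Hc i. apply (regular_ext (if Z.eqb i d then c else zeroF)). intros; rewrite coef_monoS; destruct (i =? d)%Z; auto. destruct (i =? d)%Z; auto. apply regular_zeroF. Qed.
Lemma rs_sone : regular_ser sone.
Proof. apply rs_monoS, regular_constF. Qed.
Lemma rs_szero : regular_ser szero.
Proof. intros i. apply (regular_ext zeroF). intros; rewrite coef_szero; auto. apply regular_zeroF. Qed.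
Lemma rs_sdk f : regular_ser f -> regular_ser (sdk f).
Proof. intros Hf i. apply (regular_ext (fun s x t => IZR (i+1) * coef f (i+1) s x t)). intros; rewrite coef_sdk; auto. apply regular_scal; auto. Qed.
Lemma rs_spos f : regular_ser f -> regular_ser (spos f).
Proof. intros Hf i. apply (regular_ext (if (0 <? i)%Z then coef f i else zeroF)). intros; rewrite coef_spos; destruct (0 <? i)%Z; auto. destruct (0 <? i)%Z; auto. apply regular_zeroF. Qed.
Lemma rs_snneg f : regular_ser f -> regular_ser (snneg f).
Proof. intros Hf i. apply (regular_ext (if (0 <=? i)%Z then coef f i else zeroF)). intros; rewrite coef_snneg; destruct (0 <=? i)%Z; auto. destruct (0 <=? i)%Z; auto. apply regular_zeroF. Qed.
Lemma rs_smul f g : regular_ser f -> regular_ser g -> regular_ser (smul f g).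
Proof.
  intros Hf Hg m.
  apply (regular_ext (fun s x t => sumZ (m - sdeg g) (Z.to_nat (sdeg f - (m - sdeg g) + 1)) (fun i => (fun s x t => coef f i s x t * coef g (m - i) s x t) s x t))).
  - intros. rewrite (coef_smul_cover f g (sdeg f) (sdeg g)) by apply deg_le_sdeg. reflexivity.
  - apply regular_sumZ. intros; apply regular_mult; auto.
Qed.
Lemma rs_spow f n : regular_ser f -> regular_ser (spow f n).
Proof. intros Hf. induction n; [apply rs_sone|]. rewrite spow_S. apply rs_smul; auto. Qed.
Lemma rs_sh f a : regular_ser f -> regular a -> regular_ser (sh f a).
Proof.
  intros Hf Ha m.
  apply (regular_ext (fun s x t => sumZ m (Z.to_nat (sdeg f - m + 1)) (fun i => (fun s x t => coef f i s x t * gbZ i (i - m) * (- a s x t) ^ Z.to_nat (i - m)) s x t))).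
  - intros. rewrite (coef_sh_gen f a (sdeg f) m m (Z.to_nat (sdeg f - m + 1))) by (try apply deg_le_sdeg; lia). reflexivity.
  - apply regular_sumZ. intros i. apply regular_mult; [apply regular_mult; auto; apply regular_const|].
    apply regular_pow, regular_opp; auto.
Qed.

Section SMap.
Variable Dr : Defs.Fn -> Defs.Fn.
Hypothesis HD : Der Dr.

Lemma Dz : Dr zeroF = zeroF.
Proof. apply fn_ext. intros. apply (D_const _ HD 0). Qed.

Lemma D_ext f g : (forall s x t, f s x t = g s x t) -> Dr f = Dr g.
Proof. intros H. rewrite (fn_ext f g H). reflexivity. Qed.

Lemma D_sum lo n (F : Z -> Defs.Fn) : (forall j, regular (F j)) -> forall s x t,
  Dr (fun s x t => sumZ lo n (fun j => F j s x t)) s x t = sumZ lo n (fun j => Dr (F j) s x t).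
Proof.
  intros H. revert lo; induction n; intros lo s x t.
  - unfold sumZ; simpl. apply (D_const _ HD 0).
  - rewrite (D_ext _ (fun s x t => F lo s x t + sumZ (lo + 1) n (fun j => F j s x t))) by (intros; apply sumZ_S).
    rewrite (D_plus _ HD); auto. rewrite IHn, sumZ_S. reflexivity. apply regular_sumZ; auto.
Qed.

Lemma deg_le_smap f d : deg_le f d -> deg_le (smap Dr f) d.
Proof.
  intros Hf i Hi s x t. rewrite coef_smap by apply Dz.
  rewrite (D_ext _ zeroF) by (intros; apply Hf; auto). rewrite Dz. reflexivity.
Qed.

#[local] Instance smap_Pr : Proper (ser_eq ==> ser_eq) (smap Dr).
Proof. intros f g E. apply smap_eq; auto using Dz. Qed.

Lemma smap_add f g : regular_ser f -> regular_ser g -> ser_eq (smap Dr (sadd f g)) (sadd (smap Dr f) (smap Dr g)).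
Proof.
  intros Hf Hg i s x t. rewrite coef_sadd, !coef_smap by apply Dz.
  rewrite (D_ext _ (fun s x t => coef f i s x t + coef g i s x t)) by (intros; apply coef_sadd).
  apply (D_plus _ HD); auto.
Qed.

Lemma smap_opp f : ser_eq (smap Dr (sopp f)) (sopp (smap Dr f)).
Proof.
  intros i s x t. rewrite coef_sopp, !coef_smap by apply Dz.
  rewrite (D_ext _ (fun s x t => - coef f i s x t)) by (intros; apply coef_sopp).
  apply (D_opp _ HD).
Qed.

Lemma smap_sub f g : regular_ser f -> regular_ser g -> ser_eq (smap Dr (ssub f g)) (ssub (smap Dr f) (smap Dr g)).
Proof. intros. unfold ssub. rewrite smap_add, smap_opp; auto using rs_sopp. reflexivity. Qed.

Lemma smap_monoS d c : ser_eq (smap Dr (monoS d c)) (monoS d (Dr c)).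
Proof.
  intros i s x t. rewrite coef_smap, !coef_monoS by apply Dz.
  destruct (Z.eqb_spec i d).
  - rewrite (D_ext _ c); auto. intros; rewrite coef_monoS. destruct (Z.eqb_spec i d); tauto.
  - rewrite (D_ext _ zeroF). rewrite Dz; reflexivity. intros; rewrite coef_monoS. destruct (Z.eqb_spec i d); tauto.
Qed.

Lemma smap_sscale c f : regular c -> regular_ser f ->
  ser_eq (smap Dr (sscale c f)) (sadd (sscale (Dr c) f) (sscale c (smap Dr f))).
Proof.
  intros Hc Hf i s x t. rewrite coef_sadd, !coef_sscale, !coef_smap by apply Dz.
  rewrite (D_ext _ (fun s x t => c s x t * coef f i s x t)) by (intros; apply coef_sscale).
  apply (D_mult _ HD); auto.
Qed.

Lemma smap_mul f g : regular_ser f -> regular_ser g ->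
  ser_eq (smap Dr (smul f g)) (sadd (smul (smap Dr f) g) (smul f (smap Dr g))).
Proof.
  intros Hf Hg m s x t. rewrite coef_sadd, coef_smap by apply Dz.
  rewrite (D_ext _ (fun s x t => sumZ (m - sdeg g) (Z.to_nat (sdeg f - (m - sdeg g) + 1)) (fun i => (fun s x t => coef f i s x t * coef g (m - i) s x t) s x t))).
  2:{ intros. rewrite (coef_smul_cover f g (sdeg f) (sdeg g)) by apply deg_le_sdeg. reflexivity. }
  rewrite D_sum by (intros; apply regular_mult; auto).
  rewrite (coef_smul_cover (smap Dr f) g (sdeg f) (sdeg g)) by (try apply deg_le_smap; apply deg_le_sdeg).
  rewrite (coef_smul_cover f (smap Dr g) (sdeg f) (sdeg g)) by (try apply deg_le_smap; apply deg_le_sdeg).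
  rewrite <- sumZ_plus. apply sumZ_ext. intros i _. rewrite (D_mult _ HD); auto. rewrite !coef_smap by apply Dz. reflexivity.
Qed.

End SMap.

Record SDer (d : ser -> ser) (ok : ser -> Prop) : Prop := {
  sd_proper : forall f g, ser_eq f g -> ser_eq (d f) (d g);
  sd_add : forall f g, ok f -> ok g -> ser_eq (d (sadd f g)) (sadd (d f) (d g));
  sd_opp : forall f, ok f -> ser_eq (d (sopp f)) (sopp (d f));
  sd_mul : forall f g, ok f -> ok g -> ser_eq (d (smul f g)) (sadd (smul (d f) g) (smul f (d g)));
  sd_cst : forall c, ser_eq (d (monoS 0 (constF c))) szero;
  ok_eq : forall f g, ser_eq f g -> ok f -> ok g;
  ok_add : forall f g, ok f -> ok g -> ok (sadd f g);
  ok_opp : forall f, ok f -> ok (sopp f);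
  ok_mul : forall f g, ok f -> ok g -> ok (smul f g);
  ok_cst : forall c, ok (monoS 0 (constF c));
  sd_deg : forall f k, deg_le f k -> deg_le (d f) k;
  sd_agree : forall f g M, (forall i, (M <= i)%Z -> forall s x t, coef f i s x t = coef g i s x t) ->
     forall i, (M <= i)%Z -> forall s x t, coef (d f) i s x t = coef (d g) i s x t
}.

Lemma SDer_sdk : SDer sdk (fun _ => True).
Proof.
  constructor; auto.
  - intros; apply sdk_Proper; auto.
  - intros; apply sdk_add.
  - intros; apply sdk_opp.
  - intros; apply sdk_mul.
  - intros c. rewrite sdk_monoS. intros i s x t. rewrite coef_monoS, coef_szero. destruct (_ =? _)%Z; simpl; ring.
  - intros f k H. apply (deg_le_mono _ (k - 1)); [apply deg_le_sdk; auto|lia].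
  - intros f g M H i Hi s x t. rewrite !coef_sdk, H by lia. reflexivity.
Qed.

Lemma SDer_smap Dr : Der Dr -> SDer (smap Dr) regular_ser.
Proof.
  intros HD. constructor.
  - intros; apply smap_eq; auto using Dz.
  - intros; apply smap_add; auto.
  - intros; apply smap_opp; auto.
  - intros; apply smap_mul; auto.
  - intros c. rewrite smap_monoS by auto. intros i s x t. rewrite coef_monoS, coef_szero.
    destruct (_ =? _)%Z; auto. apply (D_const _ HD c).
  - apply rs_eq.
  - apply rs_sadd.
  - apply rs_sopp.
  - apply rs_smul.
  - intros; apply rs_monoS, regular_constF.
  - intros; apply deg_le_smap; auto.
  - intros f g M H i Hi s x t. rewrite !coef_smap by (apply Dz; auto).
    rewrite (D_ext Dr (coef f i) (coef g i)) by (intros; apply H; auto). reflexivity.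
Qed.

Definition cst (c : R) : ser := monoS 0 (constF c).

Lemma cst_add a b : ser_eq (sadd (cst a) (cst b)) (cst (a + b)).
Proof. unfold cst. rewrite monoS_add. apply monoS_ext. intros; reflexivity. Qed.
Lemma cst_mul a b : ser_eq (smul (cst a) (cst b)) (cst (a * b)).
Proof. unfold cst. rewrite monoS_mul. apply monoS_ext. intros; reflexivity. Qed.
Lemma cst_1 : ser_eq (cst 1) sone.
Proof. reflexivity. Qed.
Lemma cst_0 : ser_eq (cst 0) szero.
Proof. unfold cst. apply monoS_zero. Qed.

Section SD.
Variables (d : ser -> ser) (ok : ser -> Prop).
Hypothesis Hd : SDer d ok.

#[local] Instance d_Pr : Proper (ser_eq ==> ser_eq) d.
Proof. intros f g E. apply (sd_proper _ _ Hd); auto. Qed.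

Lemma ok_spow f n : ok f -> ok (spow f n).
Proof. intros Hf. induction n; [apply (ok_cst _ _ Hd 1)|]. rewrite spow_S. apply (ok_mul _ _ Hd); auto. Qed.

Lemma sd_pow f n : ok f -> ser_eq (d (spow f (S n))) (smul (cst (INR (S n))) (smul (spow f n) (d f))).
Proof.
  intros Hf. induction n.
  - rewrite spow_S, (sd_mul _ _ Hd) by (auto; apply (ok_cst _ _ Hd 1)). simpl spow.
    assert (E : ser_eq (d sone) szero) by apply (sd_cst _ _ Hd 1). rewrite E.
    change (INR 1) with 1. rewrite cst_1. ring.
  - rewrite spow_S, (sd_mul _ _ Hd) by (auto; apply ok_spow; auto). rewrite IHn.
    rewrite !S_INR. rewrite <- !cst_add, !cst_1. rewrite spow_S. ring.
Qed.

End SD.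

Lemma gb_low_id (i m : Z) (A : R) : (m <= i)%Z ->
  gbZ i (i - m) * INR (Z.to_nat (i - m)) * A ^ Nat.pred (Z.to_nat (i - m))
  = IZR i * gbZ (i - 1) (i - 1 - m) * A ^ Z.to_nat (i - 1 - m).
Proof.
  intros H. destruct (Z.eq_dec i m).
  - subst. replace (m - m)%Z with 0%Z by lia. rewrite (gbZ_neg (m - 1)) by lia. simpl. ring.
  - rewrite !gbZ_nat by lia. replace (Z.to_nat (i - m)) with (S (Z.to_nat (i - 1 - m))) by lia.
    simpl Nat.pred. rewrite <- (gbinom_low i). ring.
Qed.

Lemma smap_sh Dr f a : Der Dr -> regular_ser f -> regular a ->
  ser_eq (smap Dr (sh f a)) (ssub (sh (smap Dr f) a) (smul (monoS 0 (Dr a)) (sh (sdk f) a))).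
Proof.
  intros HD Hf Ha m s x t. set (d := sdeg f). set (N := Z.to_nat (d - m + 2)).
  assert (Hd : deg_le f d) by apply deg_le_sdeg.
  rewrite coef_smap by apply (Dz _ HD).
  rewrite (D_ext Dr _ (fun s x t => sumZ m N (fun i => (fun s x t => gbZ i (i - m) * (coef f i s x t * (- a s x t) ^ Z.to_nat (i - m))) s x t))).
  2:{ intros. rewrite (coef_sh_gen f a d m m N) by (auto; unfold N; lia). apply sumZ_ext. intros; ring. }
  rewrite (D_sum _ HD).
  2:{ intros i. apply regular_scal, regular_mult; auto. apply regular_pow, regular_opp; auto. }
  rewrite coef_ssub, coef_smul_monoS_l. replace (m - 0)%Z with m by lia.
  rewrite (coef_sh_gen (smap Dr f) a d m m N) by (try apply (deg_le_smap _ HD); auto; unfold N; lia).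
  rewrite (coef_sh_gen (sdk f) a d m (m - 1) N) by (try (apply (deg_le_mono _ (d - 1)); [apply deg_le_sdk; auto|lia]); unfold N; lia).
  replace (m - 1)%Z with (m + -1)%Z by lia.
  rewrite <- sumZ_shift.
  unfold Rminus. rewrite <- sumZ_scal, <- sumZ_opp, <- sumZ_plus. apply sumZ_ext. intros i Hi.
  rewrite (D_scal _ HD), (D_mult _ HD); auto. 2:{ apply regular_pow, regular_opp; auto. }
  rewrite (D_pow _ HD) by (apply regular_opp; auto). rewrite (D_opp _ HD).
  rewrite coef_smap by apply (Dz _ HD). rewrite coef_sdk.
  replace (i + -1 + 1)%Z with i by lia. replace (i + -1 - m)%Z with (i - 1 - m)%Z by lia.
  replace (i + -1)%Z with (i - 1)%Z by lia.
  transitivity (Dr (coef f i) s x t * gbZ i (i - m) * (- a s x t) ^ Z.to_nat (i - m) +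
    - (Dr a s x t * coef f i s x t * (IZR i * gbZ (i - 1) (i - 1 - m) * (- a s x t) ^ Z.to_nat (i - 1 - m)))).
  - rewrite <- (gb_low_id i m (- a s x t)) by lia. ring.
  - ring.
Qed.


#[local] Instance smap_Pr' Dr : Der Dr -> Proper (ser_eq ==> ser_eq) (smap Dr).
Proof. intros HD f g E. apply smap_eq; auto. apply (Dz _ HD). Qed.

Lemma cancel_zero P Nz Z : deg_le P Nz -> (forall s x t, coef P Nz s x t <> 0) ->
  ser_eq (smul P Z) szero -> ser_eq Z szero.
Proof.
  intros HP Hn HZ.
  assert (K : forall n i, (sdeg Z - i < Z.of_nat n)%Z -> forall s x t, coef Z i s x t = 0).
  { induction n; intros i Hi s x t.
    - apply coef_hi. lia.
    - assert (Hd : deg_le Z i) by (intros j Hj; apply IHn; lia).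
      assert (E := coef_smul_top P Z Nz i s x t HP Hd). rewrite HZ, coef_szero in E.
      symmetry in E. apply Rmult_integral in E. destruct E as [E|E]; auto. exfalso; apply (Hn s x t); auto. }
  intros i s x t. rewrite coef_szero. apply (K (Z.to_nat (sdeg Z - i + 1))). lia.
Qed.

Lemma cancel P Nz X Y : deg_le P Nz -> (forall s x t, coef P Nz s x t <> 0) ->
  ser_eq (smul P X) (smul P Y) -> ser_eq X Y.
Proof.
  intros HP Hn E.
  assert (H0 : ser_eq (ssub X Y) szero).
  { apply (cancel_zero P Nz); auto. transitivity (ssub (smul P X) (smul P Y)); [ring|].
    rewrite E. apply sopp_def. }
  intros i s x t. assert (H1 := H0 i s x t). rewrite coef_ssub, coef_szero in H1. lra.
Qed.

Definition agree (M : Z) (f g : ser) := forall i, (M <= i)%Z -> forall s x t, coef f i s x t = coef g i s x t.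

Lemma agree_prod h X Y M : deg_le h 0 -> agree M X Y -> agree M (smul h X) (smul h Y).
Proof.
  intros Hh HA i Hi s x t. set (d := Z.max (sdeg X) (sdeg Y)).
  assert (HX : deg_le X d) by (apply (deg_le_mono _ (sdeg X)); [apply deg_le_sdeg|lia]).
  assert (HY : deg_le Y d) by (apply (deg_le_mono _ (sdeg Y)); [apply deg_le_sdeg|lia]).
  rewrite (coef_smul_cover h X 0 d) by auto. rewrite (coef_smul_cover h Y 0 d) by auto.
  apply sumZ_ext. intros j Hj. destruct (Z_le_gt_dec j 0).
  - rewrite HA by lia. reflexivity.
  - rewrite Hh by lia. ring.
Qed.

Definition lc (m : nat) : R := (-1) ^ (m + 1) / INR m.

Fixpoint TM (q : ser) (M : nat) : ser :=
  match M with
  | O => szero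
  | S M' => sadd (TM q M') (smul (cst (lc (S M'))) (spow q (S M')))
  end.

Definition lt_sum q i s x t K :=
  fold_right Rplus 0 (map (fun m => (-1) ^ (m + 1) / INR m * coef (spow q m) i s x t) (seq 1 K)).

Lemma fold_plus_c l c : fold_right Rplus c l = fold_right Rplus 0 l + c.
Proof. induction l; simpl; [ring|]. rewrite IHl. ring. Qed.

Lemma coef_TM q M i s x t : coef (TM q M) i s x t = lt_sum q i s x t M.
Proof.
  induction M; simpl.
  - apply coef_szero.
  - rewrite coef_sadd, IHM. unfold cst. rewrite coef_smul_monoS_l. replace (i - 0)%Z with i by lia.
    unfold lt_sum. rewrite seq_S, map_app, fold_right_app. cbn [map fold_right].
    rewrite (fold_plus_c _ (_ + 0)).
    unfold lc, constF. replace (1 + M)%nat with (S M) by lia. rewrite spow_S, Rplus_0_r. reflexivity.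
Qed.

Lemma lt_sum_ext q i s x t K : deg_le q (-1) -> (Z.to_nat (- i) <= K)%nat ->
  lt_sum q i s x t K = lt_sum q i s x t (Z.to_nat (- i)).
Proof.
  intros Hq HK. unfold lt_sum. replace K with (Z.to_nat (- i) + (K - Z.to_nat (- i)))%nat by lia.
  rewrite seq_app, map_app, fold_right_app.
  assert (E : fold_right Rplus 0 (map (fun m => (-1) ^ (m + 1) / INR m * coef (spow q m) i s x t)
        (seq (1 + Z.to_nat (- i)) (K - Z.to_nat (- i)))) = 0).
  { generalize (K - Z.to_nat (- i))%nat. intros e.
    assert (Hm : forall m, In m (seq (1 + Z.to_nat (- i)) e) -> (Z.of_nat m > - i)%Z).
    { intros m Hm. apply in_seq in Hm. lia. }
    induction (seq (1 + Z.to_nat (- i)) e) as [|m l IH]; simpl; auto.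
    rewrite IH by (intros; apply Hm; simpl; auto).
    rewrite (deg_le_spow q (-1) m Hq i) by (specialize (Hm m (or_introl eq_refl)); lia). ring. }
  rewrite E. reflexivity.
Qed.

Lemma deg_q_pow q m : deg_le q (-1) -> deg_le (spow q m) (- Z.of_nat m).
Proof. intros Hq. apply (deg_le_mono _ (Z.of_nat m * -1)); [apply deg_le_spow; auto|lia]. Qed.

Lemma logtail_TM P Nz M : agree (- Z.of_nat M) (logtail P Nz) (TM (lq P Nz) M).
Proof.
  intros i Hi s x t. rewrite coef_TM.
  assert (Hq : deg_le (lq P Nz) (-1)) by apply deg_le_sdeg.
  destruct (Z_le_gt_dec i (-1)).
  - unfold coef at 1; simpl. destruct (Z.leb_spec i (-1)); [|lia].
    rewrite (lt_sum_ext _ _ _ _ _ M) by (auto; lia). reflexivity.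
  - rewrite coef_hi by (simpl; lia). unfold lt_sum.
    symmetry. clear Hi. destruct M; [reflexivity|].
    assert (Hm : forall m, In m (seq 1 (S M)) -> (1 <= m)%nat) by (intros m Hm; apply in_seq in Hm; lia).
    induction (seq 1 (S M)) as [|m l IH]; simpl; auto.
    rewrite IH by (intros; apply Hm; simpl; auto).
    rewrite (deg_q_pow _ m Hq i) by (specialize (Hm m (or_introl eq_refl)); lia). ring.
Qed.

Section LOGD.
Variables (d : ser -> ser) (ok : ser -> Prop).
Hypothesis Hd : SDer d ok.

#[local] Instance d_Pr' : Proper (ser_eq ==> ser_eq) d.
Proof. intros f g E. apply (sd_proper _ _ Hd); auto. Qed.

Lemma d_cst_mul c X : ok X -> ser_eq (d (smul (cst c) X)) (smul (cst c) (d X)).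
Proof.
  intros HX. rewrite (sd_mul _ _ Hd); auto. 2: apply (ok_cst _ _ Hd).
  assert (E : ser_eq (d (cst c)) szero) by apply (sd_cst _ _ Hd). rewrite E. ring.
Qed.

Lemma cst_opp c : ser_eq (cst (- c)) (sopp (cst c)).
Proof. unfold cst. rewrite monoS_opp. apply monoS_ext. intros; reflexivity. Qed.

Lemma ok_TM q M : ok q -> ok (TM q M).
Proof.
  intros Hq. induction M; simpl.
  - apply (ok_eq _ _ Hd (cst 0)). apply cst_0. apply (ok_cst _ _ Hd).
  - apply (ok_add _ _ Hd); auto. apply (ok_mul _ _ Hd); [apply (ok_cst _ _ Hd)|apply (ok_spow _ _ Hd q (S M)); auto].
Qed.

Lemma TM_tele q M : ok q ->
  ser_eq (smul (sadd sone q) (d (TM q M))) (sadd (d q) (smul (cst ((-1) ^ (M + 1))) (smul (spow q M) (d q)))).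
Proof.
  intros Hq. induction M.
  - change (TM q 0) with szero. assert (E : ser_eq (d szero) szero).
    { transitivity (d (cst 0)); [apply (sd_proper _ _ Hd); symmetry; apply cst_0 | apply (sd_cst _ _ Hd)]. }
    rewrite E. simpl. replace (-1 * 1) with (- (1)) by ring. rewrite cst_opp, cst_1. ring.
  - change (TM q (S M)) with (sadd (TM q M) (smul (cst (lc (S M))) (spow q (S M)))).
    rewrite (sd_add _ _ Hd). 2: apply ok_TM; auto.
    2: apply (ok_mul _ _ Hd); [apply (ok_cst _ _ Hd)|apply (ok_spow _ _ Hd q (S M)); auto].
    rewrite d_cst_mul by (apply (ok_spow _ _ Hd q (S M)); auto).
    rewrite (sd_pow _ _ Hd) by auto.
    transitivity (sadd (smul (sadd sone q) (d (TM q M))) (smul (smul (cst (lc (S M))) (cst (INR (S M)))) (smul (sadd sone q) (smul (spow q M) (d q))))).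
    { ring. }
    rewrite IHM, cst_mul.
    assert (E1 : lc (S M) * INR (S M) = - (-1) ^ (M + 1)).
    { unfold lc. replace (S M + 1)%nat with (S (M+1)) by lia. simpl pow. field. apply not_0_INR; lia. }
    assert (E2 : (-1) ^ (S M + 1) = - (-1) ^ (M + 1)).
    { replace (S M + 1)%nat with (S (M+1)) by lia. simpl pow. ring. }
    rewrite E1, E2, !cst_opp. rewrite spow_S. ring.
Qed.

End LOGD.

Lemma log_tele d ok q T : SDer d ok -> ok q -> deg_le q (-1) ->
  (forall M, agree (- Z.of_nat M) T (TM q M)) ->
  ser_eq (smul (sadd sone q) (d T)) (d q).
Proof.
  intros Hd Hok Hq HA i s x t.
  set (M := S (Z.to_nat (- i))).
  assert (H1 : agree (- Z.of_nat M) (d T) (d (TM q M))).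
  { intros j Hj. apply (sd_agree _ _ Hd _ _ (- Z.of_nat M)); auto. apply HA. }
  assert (H2 := agree_prod (sadd sone q) _ _ _ (deg_le_sadd _ _ _ deg_le_sone (deg_le_mono _ _ 0 Hq ltac:(lia))) H1).
  assert (Hi : (- Z.of_nat M <= i)%Z) by (unfold M; lia). rewrite (H2 i Hi).
  rewrite (TM_tele d ok Hd q M Hok). rewrite coef_sadd. unfold cst. rewrite coef_smul_monoS_l.
  replace (i - 0)%Z with i by lia.
  rewrite (deg_le_smul _ _ (- Z.of_nat M) (-1) (deg_q_pow q M Hq) (sd_deg _ _ Hd _ _ Hq)) by (unfold M; lia).
  ring.
Qed.

Lemma coef_lq P Nz j s x t : coef (lq P Nz) j s x t = if (j <=? -1)%Z then coef P (Nz + j) s x t / lead P Nz s x t else 0.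
Proof. unfold coef at 1; simpl. destruct (j <=? -1)%Z; reflexivity. Qed.

Lemma P_fact P Nz : deg_le P Nz -> (forall s x t, coef P Nz s x t <> 0) ->
  ser_eq P (sscale (lead P Nz) (smul (monoS Nz (constF 1)) (sadd sone (lq P Nz)))).
Proof.
  intros HP Hn i s x t. rewrite coef_sscale, coef_smul_monoS_l, coef_sadd, coef_sone.
  rewrite coef_lq. unfold lead, constF.
  destruct (Z.eqb_spec (i - Nz) 0).
  - assert (i = Nz) by lia. subst. destruct (Z.leb_spec (Nz - Nz) (-1)); [lia|]. unfold zeroF. ring.
  - destruct (Z.leb_spec (i - Nz) (-1)).
    + replace (Nz + (i - Nz))%Z with i by lia. field. auto.
    + rewrite HP by lia. unfold zeroF. ring.
Qed.

Lemma regular_lead P Nz : regular_ser P -> regular (lead P Nz).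
Proof. intros H. apply H. Qed.

Lemma rs_lq P Nz : regular_ser P -> (forall s x t, coef P Nz s x t <> 0) -> regular_ser (lq P Nz).
Proof.
  intros HP Hn i. unfold coef; simpl. destruct (i <=? -1)%Z; [|apply regular_zeroF].
  apply (regular_ext (fun s x t => coef P (Nz + i) s x t * / lead P Nz s x t)).
  - intros; reflexivity.
  - apply regular_mult; auto. apply regular_inv; auto.
Qed.

Lemma LK P Nz : deg_le P Nz -> (forall s x t, coef P Nz s x t <> 0) ->
  ser_eq (smul P (log_dk P Nz)) (sdk P).
Proof.
  intros HP Hn.
  set (K := monoS Nz (constF 1)). set (q := lq P Nz). set (U := sadd sone q).
  assert (HF := P_fact P Nz HP Hn). fold K q U in HF.
  assert (Hq : deg_le q (-1)) by apply deg_le_sdeg.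
  assert (HT := log_tele sdk (fun _ => True) q (logtail P Nz) SDer_sdk I Hq (logtail_TM P Nz)). fold U in HT.
  rewrite (sdk_Proper P _ HF).
  transitivity (smul (sscale (lead P Nz) (smul K U)) (log_dk P Nz)). { apply smul_Proper; [exact HF|reflexivity]. }
  unfold log_dk. rewrite sdk_sscale, !sscale_as.
  unfold U at 2. rewrite sdk_mul, sdk_add, sdk_sone. unfold K at 2. rewrite sdk_monoS.
  transitivity (sadd (smul (monoS 0 (lead P Nz)) (smul (smul K (monoS (-1) (constF (IZR Nz)))) U))
                     (smul (monoS 0 (lead P Nz)) (smul K (smul U (sdk (logtail P Nz)))))).
  { unfold U; ring. }
  rewrite HT. unfold K. rewrite monoS_mul. replace (Nz + -1)%Z with (Nz - 1)%Z by lia.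
  rewrite (monoS_ext (Nz - 1) _ (fun s x t => IZR Nz * constF 1 s x t)) by (intros; unfold constF; ring).
  unfold U. ring.
Qed.

Lemma LD Dr P Nz : Der Dr -> regular_ser P -> deg_le P Nz -> (forall s x t, coef P Nz s x t <> 0) ->
  ser_eq (smul P (log_dD Dr P Nz)) (smap Dr P).
Proof.
  intros HD HrP HP Hn.
  set (K := monoS Nz (constF 1)). set (q := lq P Nz). set (U := sadd sone q).
  assert (HF := P_fact P Nz HP Hn). fold K q U in HF.
  assert (Hq : deg_le q (-1)) by apply deg_le_sdeg.
  assert (Hrq : regular_ser q) by (apply rs_lq; auto).
  assert (HT := log_tele (smap Dr) regular_ser q (logtail P Nz) (SDer_smap Dr HD) Hrq Hq (logtail_TM P Nz)). fold U in HT.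
  assert (HrK : regular_ser K) by (apply rs_monoS, regular_constF).
  assert (HrU : regular_ser U) by (apply rs_sadd; auto using rs_sone).
  assert (Hp0 : regular (lead P Nz)) by apply HrP.
  rewrite (smap_Pr' Dr HD _ _ HF).
  transitivity (smul (sscale (lead P Nz) (smul K U)) (log_dD Dr P Nz)). { apply smul_Proper; [exact HF|reflexivity]. }
  unfold log_dD.
  rewrite (smap_sscale Dr HD) by (auto; apply rs_smul; auto).
  rewrite (smap_mul Dr HD) by auto.
  assert (Z1 : forall d, ser_eq (monoS d (Dr (constF 1))) szero).
  { intros d. rewrite <- (monoS_zero d). apply monoS_ext. intros. apply (D_const _ HD 1). }
  assert (A1 : ser_eq (smap Dr K) szero) by (unfold K; rewrite (smap_monoS Dr HD); apply Z1).
  assert (A2 : ser_eq (smap Dr U) (smap Dr q)).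
  { unfold U. rewrite (smap_add Dr HD) by (auto using rs_sone). unfold sone. rewrite (smap_monoS Dr HD), Z1. ring. }
  rewrite A1, A2, !sscale_as.
  assert (E : ser_eq (smul (monoS 0 (lead P Nz)) (monoS 0 (Dr (logc P Nz)))) (monoS 0 (Dr (lead P Nz)))).
  { rewrite monoS_mul. apply monoS_ext. intros s x t. unfold logc.
    rewrite (D_ln _ HD (lead P Nz)) by auto. field. apply Hn. }
  transitivity (sadd (smul (smul (monoS 0 (lead P Nz)) (monoS 0 (Dr (logc P Nz)))) (smul K U))
                     (smul (monoS 0 (lead P Nz)) (smul K (smul U (smap Dr (logtail P Nz)))))).
  { unfold U; ring. }
  rewrite HT, E. unfold U. ring.
Qed.

#[global] Instance smapX_Pr : Proper (ser_eq ==> ser_eq) (smap dX).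
Proof. intros f g E. apply smap_eq; auto. apply (Dz _ Der_dX). Qed.
#[global] Instance smapS_Pr : Proper (ser_eq ==> ser_eq) (smap dS).
Proof. intros f g E. apply smap_eq; auto. apply (Dz _ Der_dS). Qed.
#[global] Instance smapT_Pr n : Proper (ser_eq ==> ser_eq) (smap (dT n)).
Proof. intros f g E. apply smap_eq; auto. apply (Dz _ (Der_dT n)). Qed.

#[global] Instance pb_Proper : Proper (ser_eq ==> ser_eq ==> ser_eq) pb.
Proof. intros f f' Hf g g' Hg. unfold pb. rewrite Hf, Hg. reflexivity. Qed.

Lemma pbLog_Proper P Nz : Proper (ser_eq ==> ser_eq) (pbLog P Nz).
Proof. intros g g' Hg. unfold pbLog. rewrite Hg. reflexivity. Qed.

Lemma sdk_m0 c : ser_eq (sdk (monoS 0 c)) szero.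
Proof.
  rewrite sdk_monoS. rewrite <- (monoS_zero (0 - 1)). apply monoS_ext. intros. unfold zeroF. simpl. ring.
Qed.

Lemma m0_ext c c' : (forall s x t, c s x t = c' s x t) -> ser_eq (monoS 0 c) (monoS 0 c').
Proof. apply monoS_ext. Qed.

Lemma coef0_neg f g d1 d2 s x t : deg_le f d1 -> deg_le g d2 -> (d1 + d2 < 0)%Z -> coef (smul f g) 0 s x t = 0.
Proof. intros H1 H2 H3. apply (deg_le_smul f g d1 d2); auto. Qed.

Lemma coef0_top f g s x t : deg_le f 0 -> deg_le g 0 -> coef (smul f g) 0 s x t = coef f 0 s x t * coef g 0 s x t.
Proof. intros H1 H2. apply (coef_smul_top f g 0 0); auto. Qed.

Section LFacts.
Variable L : ser.
Hypothesis HL1 : forall s x t, coef L 1 s x t = 1.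
Hypothesis HL2 : forall i, (1 < i)%Z -> forall s x t, coef L i s x t = 0.
Hypothesis rL : regular_ser L.

Lemma degL : deg_le L 1.
Proof. intros i Hi; apply HL2; auto. Qed.

Lemma coefL1_fn : coef L 1 = constF 1.
Proof. apply fn_ext. intros; apply HL1. Qed.

Lemma deg_Lx Dr : Der Dr -> deg_le (smap Dr L) 0.
Proof.
  intros HD i Hi s x t. rewrite coef_smap by apply (Dz _ HD).
  destruct (Z.eq_dec i 1).
  - subst. rewrite coefL1_fn. apply (D_const _ HD 1).
  - rewrite (D_ext Dr _ zeroF) by (intros; apply HL2; lia). rewrite (Dz _ HD). reflexivity.
Qed.

Lemma deg_Lk : deg_le (sdk L) 0.
Proof. intros i Hi s x t. rewrite coef_sdk, HL2 by lia. ring. Qed.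

Lemma Lk0 s x t : coef (sdk L) 0 s x t = 1.
Proof. rewrite coef_sdk. simpl. rewrite HL1. ring. Qed.

End LFacts.

Definition Rem (X : ser) : ser := ssub X (spos X).

Lemma deg_Rem X : deg_le (Rem X) 0.
Proof. intros i Hi s x t. unfold Rem. rewrite coef_ssub, coef_spos. destruct (Z.ltb_spec 0 i); [ring|lia]. Qed.

Lemma Rem_0 X s x t : coef (Rem X) 0 s x t = coef X 0 s x t.
Proof. unfold Rem. rewrite coef_ssub, coef_spos. simpl. ring. Qed.

Lemma Rem_0_fn X : coef (Rem X) 0 = coef X 0.
Proof. apply fn_ext. intros; apply Rem_0. Qed.

Lemma Rem_split X : ser_eq X (sadd (spos X) (Rem X)).
Proof. unfold Rem. ring. Qed.

Lemma deg_Remk X : deg_le (sdk (Rem X)) (-2).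
Proof.
  intros i Hi s x t. rewrite coef_sdk. destruct (Z.eq_dec i (-1)).
  - subst. simpl. ring.
  - rewrite (deg_Rem X) by lia. ring.
Qed.

Lemma spos_0_fn X : coef (spos X) 0 = zeroF.
Proof. apply fn_ext. intros. rewrite coef_spos. reflexivity. Qed.

Lemma deg_logtail P Nz : deg_le (logtail P Nz) (-1).
Proof. apply deg_le_sdeg. Qed.

Lemma deg_logdk P Nz : deg_le (log_dk P Nz) (-1).
Proof.
  unfold log_dk. apply deg_le_sadd; [apply deg_le_monoS|].
  apply (deg_le_mono _ (-1 - 1)); [apply deg_le_sdk, deg_logtail|lia].
Qed.

Lemma deg_logdD Dr P Nz : Der Dr -> deg_le (log_dD Dr P Nz) 0.
Proof.
  intros HD. unfold log_dD. apply deg_le_sadd; [apply deg_le_monoS|].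
  apply (deg_le_mono _ (-1)); [apply (deg_le_smap _ HD), deg_logtail|lia].
Qed.

Lemma logdD0 Dr P Nz s x t : Der Dr -> regular_ser P -> (forall s x t, coef P Nz s x t <> 0) ->
  coef (log_dD Dr P Nz) 0 s x t = Dr (coef P Nz) s x t / coef P Nz s x t.
Proof.
  intros HD HP Hn. unfold log_dD. rewrite coef_sadd, coef_monoS. simpl.
  rewrite coef_smap by apply (Dz _ HD).
  rewrite (D_ext Dr (coef (logtail P Nz) 0) zeroF) by (intros; apply deg_logtail; lia).
  rewrite (Dz _ HD). unfold zeroF, logc. rewrite (D_ln _ HD (lead P Nz)); auto. unfold lead. ring.
Qed.

Section Coef0.
Variables (L P : ser) (Nz : Z).
Hypothesis HL1 : forall s x t, coef L 1 s x t = 1.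
Hypothesis HL2 : forall i, (1 < i)%Z -> forall s x t, coef L i s x t = 0.
Hypothesis rL : regular_ser L.
Hypothesis rP : regular_ser P.
Hypothesis dP : deg_le P Nz.
Hypothesis nP : forall s x t, coef P Nz s x t <> 0.

Let SX := SDer_smap dX Der_dX.

Lemma pb_pow_zero n : ser_eq (pb (spow L (S n)) L) szero.
Proof.
  unfold pb. rewrite (sd_pow _ _ SDer_sdk) by auto. rewrite (sd_pow _ _ SX) by auto.
  rewrite <- (sopp_def (smul (smul (cst (INR (S n))) (smul (spow L n) (sdk L))) (smap dX L))). ring.
Qed.

Lemma c1 Dr n : Der Dr -> ser_eq (smap Dr L) (pb (spos (spow L (S n))) L) ->
  forall s x t, Dr (coef L 0) s x t = dX (coef (spow L (S n)) 0) s x t.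
Proof.
  intros HD Heq s x t.
  set (X := spow L (S n)).
  assert (rX : regular_ser X) by (apply rs_spow; auto).
  assert (rB : regular_ser (spos X)) by (apply rs_spos; auto).
  assert (rR : regular_ser (Rem X)) by (apply rs_ssub; auto).
  assert (E1 : ser_eq (pb (spos X) L) (sopp (pb (Rem X) L))).
  { assert (E0 := pb_pow_zero n). fold X in E0.
    rewrite (pb_Proper _ _ (Rem_split X) L L (reflexivity _)) in E0.
    unfold pb in *. rewrite sdk_add, (smap_add dX Der_dX) in E0 by assumption.
    transitivity (sadd (sopp (ssub (smul (sdk (Rem X)) (smap dX L)) (smul (smap dX (Rem X)) (sdk L))))
       (ssub (smul (sadd (sdk (spos X)) (sdk (Rem X))) (smap dX L)) (smul (sadd (smap dX (spos X)) (smap dX (Rem X))) (sdk L)))).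
    - ring.
    - rewrite E0. ring. }
  assert (H := Heq 0%Z s x t). rewrite coef_smap in H by apply (Dz _ HD). fold X in H. rewrite H, E1.
  rewrite coef_sopp. unfold pb. rewrite coef_ssub.
  rewrite (coef0_neg (sdk (Rem X)) (smap dX L) (-2) 0 s x t (deg_Remk X) (deg_Lx L HL1 HL2 dX Der_dX)) by lia.
  rewrite (coef0_top (smap dX (Rem X)) (sdk L) s x t (deg_le_smap dX Der_dX _ _ (deg_Rem X)) (deg_Lk L HL2)).
  rewrite (Lk0 L HL1). rewrite coef_smap by apply (Dz _ Der_dX). rewrite Rem_0_fn. ring.
Qed.

Lemma c2 : ser_eq (smap dS L) (pbLog P Nz L) ->
  forall s x t, dS (coef L 0) s x t = - dX (coef P Nz) s x t / coef P Nz s x t.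
Proof.
  intros Heq s x t. assert (H := Heq 0%Z s x t). rewrite coef_smap in H by apply (Dz _ Der_dS). rewrite H.
  unfold pbLog. rewrite coef_ssub.
  rewrite (coef0_neg (log_dk P Nz) (smap dX L) (-1) 0 s x t (deg_logdk P Nz) (deg_Lx L HL1 HL2 dX Der_dX)) by lia.
  rewrite (coef0_top (log_dD dX P Nz) (sdk L) s x t (deg_logdD dX P Nz Der_dX) (deg_Lk L HL2)).
  rewrite (Lk0 L HL1), (logdD0 dX P Nz s x t Der_dX rP nP). field. auto.
Qed.

Lemma c3 Dr n : Der Dr -> ser_eq (smap dS L) (pbLog P Nz L) ->
  ser_eq (log_dD Dr P Nz) (ssub (smap dS (spos (spow L (S n)))) (pbLog P Nz (spos (spow L (S n))))) ->
  forall s x t, dS (coef (spow L (S n)) 0) s x t = - Dr (coef P Nz) s x t / coef P Nz s x t.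
Proof.
  intros HD HS Heq s x t.
  set (X := spow L (S n)).
  assert (rX : regular_ser X) by (apply rs_spow; auto).
  assert (rB : regular_ser (spos X)) by (apply rs_spos; auto).
  assert (rR : regular_ser (Rem X)) by (apply rs_ssub; auto).
  assert (H := Heq 0%Z s x t). rewrite (logdD0 Dr P Nz s x t HD rP nP) in H.
  rewrite coef_ssub, coef_smap in H by apply (Dz _ Der_dS). fold X in H. rewrite spos_0_fn, (Dz _ Der_dS) in H. unfold zeroF in H.
  assert (E1 : ser_eq (smap dS X) (pbLog P Nz X)).
  { unfold X. rewrite (sd_pow _ _ (SDer_smap dS Der_dS)) by auto. rewrite HS. unfold pbLog.
    rewrite (sd_pow _ _ SDer_sdk) by auto. rewrite (sd_pow _ _ SX) by auto. ring. }
  assert (E2 : ser_eq (pbLog P Nz X) (sadd (pbLog P Nz (spos X)) (pbLog P Nz (Rem X)))).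
  { rewrite (pbLog_Proper P Nz _ _ (Rem_split X)). unfold pbLog.
    rewrite sdk_add, (smap_add dX Der_dX) by assumption. ring. }
  rewrite <- (coef_smap dS X 0 s x t) by apply (Dz _ Der_dS).
  rewrite E1, E2, coef_sadd.
  unfold pbLog at 2. rewrite coef_ssub.
  rewrite (coef0_neg (log_dk P Nz) (smap dX (Rem X)) (-1) 0 s x t (deg_logdk P Nz) (deg_le_smap dX Der_dX _ _ (deg_Rem X))) by lia.
  rewrite (coef0_neg (log_dD dX P Nz) (sdk (Rem X)) 0 (-2) s x t (deg_logdD dX P Nz Der_dX) (deg_Remk X)) by lia.
  lra.
Qed.

End Coef0.

Lemma sh_spos_neg X a i s x t : (i < 0)%Z -> coef (sh (spos X) a) i s x t = 0.
Proof.
  intros Hi. rewrite (coef_sh_gen (spos X) a (sdeg X) i i (Z.to_nat (sdeg X - i + 1))).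
  - apply sumZ_zero. intros j Hj. rewrite coef_spos. destruct (Z.ltb_spec 0 j).
    + rewrite gbZ_van by lia. ring.
    + ring.
  - exact (deg_le_sdeg (spos X)).
  - lia.
  - lia.
Qed.

Lemma snneg_sh X a : ser_eq (snneg (sh X a)) (sadd (sh (spos X) a) (monoS 0 (coef X 0))).
Proof.
  intros i s x t. rewrite coef_snneg, coef_sadd, coef_monoS.
  rewrite ((sh_Proper _ _ (Rem_split X) a a eq_refl) i s x t).
  rewrite sh_add, coef_sadd.
  destruct (Z.leb_spec 0 i).
  - destruct (Z.eqb_spec i 0).
    + subst. rewrite (sh_top (Rem X) a 0 s x t (deg_Rem X)), Rem_0. reflexivity.
    + rewrite (deg_le_sh (Rem X) a 0 (deg_Rem X)) by lia. ring.
  - rewrite sh_spos_neg by lia. destruct (Z.eqb_spec i 0); [lia|ring].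
Qed.

Lemma Bprime L a n : ser_eq (snneg (spow (sh L a) n)) (sadd (sh (spos (spow L n)) a) (monoS 0 (coef (spow L n) 0))).
Proof. rewrite <- sh_spow. apply snneg_sh. Qed.

Section PPrime.
Variables (P : ser) (Nz : Z) (a : Defs.Fn).
Hypothesis rP : regular_ser P.
Hypothesis dP : deg_le P Nz.
Hypothesis nP : forall s x t, coef P Nz s x t <> 0.
Hypothesis ra : regular a.

Definition Pp := sscale (fun s x t => / coef P Nz s x t) (sh P a).

Lemma inv_reg : regular (fun s x t => / coef P Nz s x t).
Proof. apply regular_inv; auto. Qed.

Lemma dPp : deg_le Pp Nz.
Proof. apply deg_le_sscale, deg_le_sh; auto. Qed.

Lemma Pp_lead s x t : coef Pp Nz s x t = 1.
Proof. unfold Pp. rewrite coef_sscale, sh_top by auto. field. auto. Qed.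

Lemma nPp : forall s x t, coef Pp Nz s x t <> 0.
Proof. intros. rewrite Pp_lead. lra. Qed.

Lemma rPp : regular_ser Pp.
Proof. apply rs_sscale; [apply inv_reg|apply rs_sh; auto]. Qed.

Lemma Pp_as : ser_eq Pp (smul (monoS 0 (fun s x t => / coef P Nz s x t)) (sh P a)).
Proof. apply sscale_as. Qed.

Lemma LKp : ser_eq (log_dk Pp Nz) (sh (log_dk P Nz) a).
Proof.
  apply (cancel Pp Nz); [apply dPp|apply nPp|].
  rewrite (LK Pp Nz dPp nPp). unfold Pp at 1. rewrite sdk_sscale, sdk_sh.
  rewrite <- (sh_Proper _ _ (LK P Nz dP nP) a a eq_refl). rewrite sh_mul.
  rewrite Pp_as, sscale_as. ring.
Qed.

Lemma LDp Dr : Der Dr ->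
  ser_eq (log_dD Dr Pp Nz)
    (ssub (ssub (sh (log_dD Dr P Nz) a) (smul (monoS 0 (Dr a)) (sh (log_dk P Nz) a)))
          (monoS 0 (fun s x t => Dr (coef P Nz) s x t / coef P Nz s x t))).
Proof.
  intros HD.
  apply (cancel Pp Nz); [apply dPp|apply nPp|].
  rewrite (LD Dr Pp Nz HD rPp dPp nPp). unfold Pp at 1.
  rewrite (smap_sscale Dr HD _ _ inv_reg (rs_sh _ _ rP ra)).
  rewrite (smap_sh Dr P a HD rP ra).
  rewrite <- (sh_Proper _ _ (LD Dr P Nz HD rP dP nP) a a eq_refl).
  rewrite <- (sh_Proper _ _ (LK P Nz dP nP) a a eq_refl).
  rewrite !sh_mul. rewrite Pp_as, !sscale_as.
  assert (E : ser_eq (monoS 0 (Dr (fun s x t => / coef P Nz s x t)))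
     (sopp (smul (monoS 0 (fun s x t => / coef P Nz s x t)) (monoS 0 (fun s x t => Dr (coef P Nz) s x t / coef P Nz s x t))))).
  { rewrite monoS_mul, monoS_opp. apply monoS_ext. intros s x t.
    rewrite (D_inv _ HD (coef P Nz) (rP Nz) nP). field. auto. }
  rewrite E. ring.
Qed.

End PPrime.

Lemma m0_opp c c' : (forall s x t, c s x t = - c' s x t) -> ser_eq (monoS 0 c) (sopp (monoS 0 c')).
Proof. intros H. rewrite monoS_opp. apply monoS_ext. auto. Qed.

Theorem mainTheorem12 (N : nat) (L P : ser) :
  (0 < N)%nat ->
  is_dcmKP N L P ->
  is_dmKP N (sshift L (coef L 0))
            (sscale (fun s x t => / coef P (Z.of_nat N) s x t) (sshift P (coef L 0))).
Proof.
  intros HN (HL1 & HL2 & HP1 & HP2 & HP3 & rL & rP & HT & HS & HLog).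
  change (sscale (fun s x t => / coef P (Z.of_nat N) s x t) (sshift P (coef L 0)))
    with (Pp P (Z.of_nat N) (coef L 0)).
  assert (ra : regular (coef L 0)) by apply rL.
  assert (dP : deg_le P (Z.of_nat N)) by (intros i Hi; apply HP1; auto).
  assert (dL : deg_le L 1) by (apply degL; auto).
  split; [|split; [|split; [|split; [|split; [|split; [|split; [|split]]]]]]].
  - intros s x t. rewrite (sh_top L _ 1 s x t dL). auto.
  - intros i Hi s x t. apply (deg_le_sh L _ 1 dL); auto.
  - intros s x t. rewrite (coef_sh_gen L (coef L 0) 1 0 0 2 s x t dL) by lia.
    rewrite !sumZ_S, sumZ_0. simpl. rewrite HL1. unfold gbZ. simpl. unfold gbinom. simpl. field.
  - apply Pp_lead; auto.
  - intros i Hi s x t. apply (dPp P (Z.of_nat N) (coef L 0) dP i Hi).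
  - intros i Hi s x t. unfold Pp. rewrite coef_sscale.
    rewrite (coef_sh_gen P (coef L 0) (Z.of_nat N) i i (Z.to_nat (Z.of_nat N - i + 1)) s x t dP) by lia.
    rewrite sumZ_zero. ring. intros j Hj. destruct (Z_le_gt_dec j 0).
    + rewrite HP2 by auto. ring.
    + rewrite gbZ_van by lia. ring.
  - apply rs_sh; auto.
  - exact (rPp P (Z.of_nat N) (coef L 0) rP HP3 ra).
  - assert (HT' : forall n, (1 <= S n)%nat) by (intros; lia).
    split; [|split].
    + intros n Hn. destruct n as [|n']; [lia|].
      assert (rX : regular_ser (spow L (S n'))) by (apply rs_spow; auto).
      assert (rB : regular_ser (spos (spow L (S n')))) by (apply rs_spos; auto).
      assert (rBs : regular_ser (sh (spos (spow L (S n'))) (coef L 0))) by (apply rs_sh; auto).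
      assert (rc : regular_ser (monoS 0 (coef (spow L (S n')) 0))) by (apply rs_monoS; apply rX).
      rewrite (pb_Proper _ _ (Bprime L (coef L 0) (S n')) _ _ (reflexivity _)).
      rewrite (smap_sh (dT (S n')) L (coef L 0) (Der_dT _) rL ra).
      rewrite (sh_Proper _ _ (HT (S n') Hn) _ _ eq_refl).
      unfold pb. rewrite sdk_add, sdk_m0, (smap_add dX Der_dX _ _ rBs rc), (smap_monoS dX Der_dX).
      rewrite !sdk_sh. rewrite (smap_sh dX _ _ Der_dX rB ra), (smap_sh dX L _ Der_dX rL ra).
      rewrite sh_sub, !sh_mul.
      rewrite (m0_ext (dT (S n') (coef L 0)) (dX (coef (spow L (S n')) 0)))
        by (apply (c1 L HL1 HL2 rL (dT (S n')) n' (Der_dT _)); apply HT; lia).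
      ring.
    + rewrite (smap_sh dS L _ Der_dS rL ra), (sh_Proper _ _ HS _ _ eq_refl).
      unfold pbLog. rewrite (LKp P _ (coef L 0) dP HP3), (LDp P _ (coef L 0) rP dP HP3 ra dX Der_dX).
      rewrite sdk_sh, (smap_sh dX L _ Der_dX rL ra). rewrite !sh_sub, !sh_mul.
      rewrite (m0_opp (dS (coef L 0)) (fun s x t => dX (coef P (Z.of_nat N)) s x t / coef P (Z.of_nat N) s x t))
        by (intros; rewrite (c2 L P _ HL1 HL2 rP HP3 HS); field; auto).
      ring.
    + intros n Hn. destruct n as [|n']; [lia|].
      assert (rX : regular_ser (spow L (S n'))) by (apply rs_spow; auto).
      assert (rB : regular_ser (spos (spow L (S n')))) by (apply rs_spos; auto).
      assert (rBs : regular_ser (sh (spos (spow L (S n'))) (coef L 0))) by (apply rs_sh; auto).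
      assert (rc : regular_ser (monoS 0 (coef (spow L (S n')) 0))) by (apply rs_monoS; apply rX).
      rewrite (LDp P _ (coef L 0) rP dP HP3 ra (dT (S n')) (Der_dT _)).
      rewrite (sh_Proper _ _ (HLog (S n') Hn) _ _ eq_refl).
      rewrite (smap_eq dS _ _ (Dz _ Der_dS) (Bprime L (coef L 0) (S n'))).
      rewrite (pbLog_Proper (Pp P (Z.of_nat N) (coef L 0)) (Z.of_nat N) _ _ (Bprime L (coef L 0) (S n'))).
      unfold pbLog. rewrite (LKp P _ (coef L 0) dP HP3), (LDp P _ (coef L 0) rP dP HP3 ra dX Der_dX).
      rewrite (smap_add dS Der_dS _ _ rBs rc), (smap_sh dS _ _ Der_dS rB ra), (smap_monoS dS Der_dS).
      rewrite sdk_add, sdk_m0, (smap_add dX Der_dX _ _ rBs rc), (smap_sh dX _ _ Der_dX rB ra), (smap_monoS dX Der_dX), !sdk_sh.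
      rewrite !sh_sub, !sh_mul.
      rewrite (m0_ext (dT (S n') (coef L 0)) (dX (coef (spow L (S n')) 0)))
        by (apply (c1 L HL1 HL2 rL (dT (S n')) n' (Der_dT _)); apply HT; lia).
      rewrite (m0_opp (dS (coef L 0)) (fun s x t => dX (coef P (Z.of_nat N)) s x t / coef P (Z.of_nat N) s x t))
        by (intros; rewrite (c2 L P _ HL1 HL2 rP HP3 HS); field; auto).
      rewrite (m0_opp (dS (coef (spow L (S n')) 0)) (fun s x t => dT (S n') (coef P (Z.of_nat N)) s x t / coef P (Z.of_nat N) s x t))
        by (intros; rewrite (c3 L P _ rL rP HP3 (dT (S n')) n' (Der_dT _) HS (HLog (S n') Hn)); field; auto).
      ring.
Qed.
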